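(* Let $k\ge1$ and let $\mu_k$ be an LTI probability measure on $\{0,1\}^{\{0,\ldots,k\}}$. Then every translation invariant probability measure on $\{0,1\}^{\mathbb{Z}}$ which has marginal $\mu_k$ on coordinates $0,\ldots,k$ and has minimal total entropy among all such measures is a finite convex combination of BPC measures.
   Context: Total entropy: $S(\mu)=\lim_{j\to\infty}S(\pi_j\mu)$, $\pi_j\mu$ the marginal on coordinates $0,\ldots,j$, $S$ the Gibbs–Shannon entropy. A BPC measure is a measure giving mass $1/p$ to each of the $p$ translates of a single periodic configuration of minimal period $p$. LTI: for $A,A'\subset\{0,\ldots,k\}$ with $A'$ a translate of $A$, the marginal on $\{0,1\}^{A'}$ is the translate of that on $\{0,1\}^A$. *)

(* Defs.v *)
From Stdlib Require Import Reals List Bool.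
Import ListNotations.
Open Scope R_scope.

Definition word := list bool.

Fixpoint words (n : nat) : list word :=
  match n with
  | O => [nil]
  | S n' => flat_map (fun w => [false :: w; true :: w]) (words n')
  end.

Definition sumR {A : Type} (l : list A) (f : A -> R) : R :=
  fold_right (fun a acc => f a + acc) 0 l.

(* A translation invariant probability measure on {0,1}^Z, given by its
   cylinder probabilities: p w = mu([w] placed at any position n).
   By Kolmogorov extension these data correspond bijectively to
   translation invariant Borel probability measures on {0,1}^Z. *)
Definition is_ti_prob (p : word -> R) : Prop :=
  p nil = 1 /\
  (forall w, 0 <= p w) /\
  (forall w, p w = p (w ++ [false]) + p (w ++ [true])) /\
  (forall w, p w = p (false :: w) + p (true :: w)).

(* Probability measure on {0,1}^{0..k}: q on words of length k+1. *)
Definition is_prob_block (k : nat) (q : word -> R) : Prop :=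
  (forall w, In w (words (S k)) -> 0 <= q w) /\
  sumR (words (S k)) q = 1.

(* Marginal of q (on {0,1}^{0..k}) on the coordinate set given by the list
   of indices A, evaluated at the assignment x (x_i is the value at A_i). *)
Definition block_marginal (k : nat) (q : word -> R) (A : list nat) (x : word) : R :=
  sumR (words (S k)) (fun w =>
    if list_eq_dec bool_dec (map (fun a => nth a w false) A) x then q w else 0).

Definition is_LTI (k : nat) (q : word -> R) : Prop :=
  forall (A : list nat) (t : nat),
    (forall a, In a A -> (a + t <= k)%nat) ->
    forall x : word,
      block_marginal k q A x = block_marginal k q (map (fun a => (a + t)%nat) A) x.

Definition has_marginal (k : nat) (p q : word -> R) : Prop :=
  forall w, In w (words (S k)) -> p w = q w.

Definition plogp (x : R) : R := if Rle_dec x 0 then 0 else x * ln x.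

Definition marg_entropy (p : word -> R) (j : nat) : R :=
  - sumR (words (S j)) (fun w => plogp (p w)).

(* Extended nonnegative values: Some x = finite, None = +infinity. *)
Definition has_total_entropy (p : word -> R) (s : option R) : Prop :=
  match s with
  | Some l => Un_cv (marg_entropy p) l
  | None => cv_infty (marg_entropy p)
  end.

Definition ext_le (a b : option R) : Prop :=
  match a, b with
  | _, None => True
  | None, Some _ => False
  | Some x, Some y => x <= y
  end.

(* Periodic configurations: c : nat -> bool of minimal period per
   (a periodic bi-infinite configuration is determined by its restriction
   to nat). *)
Definition min_period (c : nat -> bool) (per : nat) : Prop :=
  (0 < per)%nat /\ (forall n, c (n + per)%nat = c n) /\
  (forall r, (0 < r < per)%nat -> ~ (forall n, c (n + r)%nat = c n)).

Fixpoint matches_at (c : nat -> bool) (i : nat) (w : word) : bool :=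
  match w with
  | nil => true
  | b :: w' => Bool.eqb (c i) b && matches_at c (S i) w'
  end.

(* Cylinder probabilities of the BPC measure: mass 1/per on each of the per
   translates of c. *)
Definition bpc_prob (c : nat -> bool) (per : nat) (w : word) : R :=
  / INR per * INR (length (filter (fun i => matches_at c i w) (seq 0 per))).

Definition is_finite_convex_comb_BPC (p : word -> R) : Prop :=
  exists l : list (R * ((nat -> bool) * nat)),
    (forall e, In e l -> 0 <= fst e /\ min_period (fst (snd e)) (snd (snd e))) /\
    sumR l fst = 1 /\
    forall w, p w = sumR l (fun e => fst e * bpc_prob (fst (snd e)) (snd (snd e)) w).

(* Main.v *)
Require Import Defs.
From Stdlib Require Import Reals List Bool Lra Lia Classical ClassicalEpsilon.
Import ListNotations.
Open Scope R_scope.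


Lemma sumR_nil {A} (f : A -> R) : sumR [] f = 0.
Proof. reflexivity. Qed.
Lemma sumR_cons {A} a l (f : A -> R) : sumR (a :: l) f = f a + sumR l f.
Proof. reflexivity. Qed.
Lemma sumR_app {A} l1 l2 (f : A -> R) : sumR (l1 ++ l2) f = sumR l1 f + sumR l2 f.
Proof. induction l1; simpl; rewrite ?sumR_nil, ?sumR_cons; [lra|]. rewrite IHl1; lra. Qed.
Lemma sumR_ext {A} l (f g : A -> R) : (forall x, In x l -> f x = g x) -> sumR l f = sumR l g.
Proof. induction l; intros H; rewrite ?sumR_nil, ?sumR_cons; auto.
  rewrite H by (left; auto). rewrite IHl; auto. intros; apply H; right; auto. Qed.
Lemma sumR_le {A} l (f g : A -> R) : (forall x, In x l -> f x <= g x) -> sumR l f <= sumR l g.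
Proof. induction l; intros H; rewrite ?sumR_nil, ?sumR_cons; [lra|].
  assert (f a <= g a) by (apply H; left; auto).
  assert (sumR l f <= sumR l g) by (apply IHl; intros; apply H; right; auto). lra. Qed.
Lemma sumR_plus {A} l (f g : A -> R) : sumR l (fun x => f x + g x) = sumR l f + sumR l g.
Proof. induction l; rewrite ?sumR_nil, ?sumR_cons; [lra|]. rewrite IHl; lra. Qed.
Lemma sumR_minus {A} l (f g : A -> R) : sumR l (fun x => f x - g x) = sumR l f - sumR l g.
Proof. induction l; rewrite ?sumR_nil, ?sumR_cons; [lra|]. rewrite IHl; lra. Qed.
Lemma sumR_scal {A} l (f : A -> R) c : sumR l (fun x => c * f x) = c * sumR l f.
Proof. induction l; rewrite ?sumR_nil, ?sumR_cons; [lra|]. rewrite IHl; lra. Qed.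
Lemma sumR_opp {A} l (f : A -> R) : sumR l (fun x => - f x) = - sumR l f.
Proof. induction l; rewrite ?sumR_nil, ?sumR_cons; [lra|]. rewrite IHl; lra. Qed.
Lemma sumR_zero {A} l (f : A -> R) : (forall x, In x l -> f x = 0) -> sumR l f = 0.
Proof. induction l; intros H; rewrite ?sumR_nil, ?sumR_cons; [lra|]. rewrite IHl, H; [lra|left; auto|]. intros; apply H; right; auto. Qed.
Lemma sumR_nonneg {A} l (f : A -> R) : (forall x, In x l -> 0 <= f x) -> 0 <= sumR l f.
Proof. intros H. rewrite <- (sumR_zero l (fun _ => 0)) by auto. apply sumR_le; auto. Qed.
Lemma sumR_map {A B} (g : A -> B) l (f : B -> R) : sumR (map g l) f = sumR l (fun x => f (g x)).
Proof. induction l; simpl; rewrite ?sumR_nil, ?sumR_cons; auto. rewrite IHl; auto. Qed.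
Lemma sumR_flat_map {A B} (g : A -> list B) l (f : B -> R) :
  sumR (flat_map g l) f = sumR l (fun x => sumR (g x) f).
Proof. induction l; simpl; rewrite ?sumR_nil, ?sumR_cons; auto. rewrite sumR_app, IHl; auto. Qed.
Lemma sumR_swap {A B} (l1 : list A) (l2 : list B) (f : A -> B -> R) :
  sumR l1 (fun a => sumR l2 (fun b => f a b)) = sumR l2 (fun b => sumR l1 (fun a => f a b)).
Proof. induction l1.
  - rewrite sumR_nil. symmetry. apply sumR_zero. intros; apply sumR_nil.
  - rewrite sumR_cons, IHl1. rewrite <- sumR_plus. apply sumR_ext. intros; rewrite sumR_cons; auto. Qed.

Lemma sumR_single_le {A} l (f : A -> R) x : In x l -> (forall y, In y l -> 0 <= f y) -> f x <= sumR l f.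
Proof. induction l; intros Hi H; [destruct Hi|]. rewrite sumR_cons. destruct Hi as [<-|Hi].
  - assert (0 <= sumR l f) by (apply sumR_nonneg; intros; apply H; right; auto). lra.
  - assert (0 <= f a) by (apply H; left; auto). assert (f x <= sumR l f) by (apply IHl; auto; intros; apply H; right; auto). lra. Qed.

Lemma sumR_single_gap {A} l (f g : A -> R) x c : In x l -> (forall y, In y l -> g y <= f y) ->
  g x + c <= f x -> sumR l g + c <= sumR l f.
Proof. induction l; intros Hi H Hx; [destruct Hi|]. rewrite !sumR_cons. destruct Hi as [<-|Hi].
  - assert (sumR l g <= sumR l f) by (apply sumR_le; intros; apply H; right; auto). lra.
  - assert (g a <= f a) by (apply H; left; auto). assert (sumR l g + c <= sumR l f) by (apply IHl; auto; intros; apply H; right; auto). lra. Qed.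

Lemma list_eq_dec_word : forall x y : word, {x = y} + {x <> y}.
Proof. apply list_eq_dec, bool_dec. Qed.

Lemma sumR_remove {A} (dec : forall x y : A, {x = y} + {x <> y}) l (f : A -> R) a :
  NoDup l -> In a l -> sumR l f = f a + sumR (remove dec a l) f.
Proof. induction l; intros Hn Hi; [destruct Hi|]. inversion Hn; subst. simpl remove.
  destruct Hi as [<-|Hi].
  - destruct (dec a0 a0) as [_|C]; [|congruence]. rewrite sumR_cons. f_equal.
    rewrite notin_remove; auto.
  - destruct (dec a a0) as [->|Ne]; [contradiction|]. rewrite !sumR_cons. rewrite (IHl H2 Hi). lra. Qed.

Lemma NoDup_remove_dec {A} (dec : forall x y : A, {x = y} + {x <> y}) a l :
  NoDup l -> NoDup (remove dec a l).
Proof. induction l; intros Hn; simpl; auto. inversion Hn; subst.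
  destruct (dec a a0); auto. constructor; auto. intro Hc. apply in_remove in Hc. tauto. Qed.

Lemma sumR_sub {A} (dec : forall x y : A, {x = y} + {x <> y}) l l' (f : A -> R) :
  NoDup l' -> incl l' l -> (forall x, In x l -> 0 <= f x) -> sumR l' f <= sumR l f.
Proof. revert l'; induction l; intros l' Hn Hinc H.
  - destruct l'; [lra|]. exfalso; apply (Hinc a); left; auto.
  - rewrite sumR_cons. destruct (in_dec dec a l') as [Hi|Hi].
    + rewrite (sumR_remove dec l' f a Hn Hi).
      assert (sumR (remove dec a l') f <= sumR l f); [|lra].
      apply IHl. apply NoDup_remove_dec; auto.
      intros y Hy. assert (y <> a) by (intro; subst; eapply remove_In; eauto).
      apply in_remove in Hy. destruct Hy. destruct (Hinc y H1); [congruence|auto].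
      intros; apply H; right; auto.
    + assert (0 <= f a) by (apply H; left; auto).
      assert (sumR l' f <= sumR l f); [|lra]. apply IHl; auto.
      intros y Hy. destruct (Hinc y Hy); [subst; contradiction|auto].
      intros; apply H; right; auto.
Qed.


Lemma ln_le_xm1 x : 0 < x -> ln x <= x - 1.
Proof. intros. pose proof (exp_ineq1_le (ln x)). rewrite exp_ln in H0; lra. Qed.
Lemma ln_le_mono x y : 0 < x -> x <= y -> ln x <= ln y.
Proof. intros. destruct (Req_dec x y) as [->|]; [lra|]. left; apply ln_increasing; lra. Qed.
Lemma ln_le0 x : 0 < x -> x <= 1 -> ln x <= 0.
Proof. intros. rewrite <- ln_1. apply ln_le_mono; lra. Qed.

Lemma plogp_pos x : 0 < x -> plogp x = x * ln x.
Proof. intros. unfold plogp. destruct (Rle_dec x 0); lra. Qed.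
Lemma plogp_0 : plogp 0 = 0.
Proof. unfold plogp. destruct (Rle_dec 0 0); lra. Qed.

Lemma plogp_le0 x : 0 <= x <= 1 -> plogp x <= 0.
Proof. intros. destruct (Req_dec x 0) as [->|]. rewrite plogp_0; lra.
  rewrite plogp_pos by lra. pose proof (ln_le0 x ltac:(lra) ltac:(lra)). nra. Qed.

Lemma plogp_super a b : 0 <= a -> 0 <= b -> plogp a + plogp b <= plogp (a + b).
Proof. intros. destruct (Req_dec a 0) as [->|]. rewrite plogp_0, !Rplus_0_l; lra.
  destruct (Req_dec b 0) as [->|]. rewrite plogp_0, !Rplus_0_r; lra.
  rewrite !plogp_pos by lra.
  pose proof (ln_le_mono a (a+b) ltac:(lra) ltac:(lra)).
  pose proof (ln_le_mono b (a+b) ltac:(lra) ltac:(lra)).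
  assert (0 <= a * (ln (a+b) - ln a)) by (apply Rmult_le_pos; lra).
  assert (0 <= b * (ln (a+b) - ln b)) by (apply Rmult_le_pos; lra). nra. Qed.

Lemma light_bound x eps : 0 <= x <= 1 -> 0 < eps ->
  (if Rlt_dec x eps then x else 0) * (- ln eps) <= - plogp x.
Proof. intros. destruct (Rlt_dec x eps).
  - destruct (Req_dec x 0) as [->|]. rewrite plogp_0; lra.
    rewrite plogp_pos by lra. pose proof (ln_le_mono x eps ltac:(lra) ltac:(lra)). nra.
  - pose proof (plogp_le0 x H). lra. Qed.

Lemma atom_bound x d : 0 < d -> (x = 0 \/ d <= x <= 1) -> - plogp x <= x * (- ln d).
Proof. intros Hd [->|Hx]. rewrite plogp_0; lra.
  rewrite plogp_pos by lra. pose proof (ln_le_mono d x ltac:(lra) ltac:(lra)). nra. Qed.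

Lemma ln_sq u : 0 < u -> ln (u * u) = 2 * ln u.
Proof. intros; rewrite ln_mult; lra. Qed.

Lemma step_K x a : 0 <= x -> 0 < a -> 2 * x - 2 * (sqrt x * sqrt a) <= plogp x - x * ln a.
Proof. intros Hx Ha. destruct (Req_dec x 0) as [->|Hx0].
  - rewrite plogp_0, sqrt_0. lra.
  - rewrite plogp_pos by lra. set (u := sqrt x). set (s := sqrt a).
    assert (Hu : 0 < u) by (apply sqrt_lt_R0; lra). assert (Hs : 0 < s) by (apply sqrt_lt_R0; lra).
    assert (Ex : x = u * u) by (unfold u; rewrite sqrt_sqrt; lra).
    assert (Ea : a = s * s) by (unfold s; rewrite sqrt_sqrt; lra).
    rewrite Ex, Ea, !ln_sq by lra.
    assert (H1 : ln (s / u) <= s / u - 1) by (apply ln_le_xm1; apply Rdiv_lt_0_compat; lra).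
    unfold Rdiv in H1. rewrite ln_mult in H1 by (try apply Rinv_0_lt_compat; lra).
    rewrite ln_Rinv in H1 by lra.
    assert (H2 : u * u * (s * / u) = u * s) by (field; lra).
    assert (0 <= u * u) by nra.
    assert (u * u * (ln s - ln u) <= u * u * (s * / u - 1)) by (apply Rmult_le_compat_l; lra).
    nra. Qed.

Lemma convex_gap a e : 0 < a <= 1 -> Rabs e <= a ->
  2 * plogp a + e * e / 2 <= plogp (a + e) + plogp (a - e).
Proof. intros Ha He. assert (He2 : - a <= e <= a) by (unfold Rabs in He; destruct (Rcase_abs e); lra). clear He. rename He2 into He.
  pose proof (step_K (a + e) a ltac:(lra) ltac:(lra)) as K1.
  pose proof (step_K (a - e) a ltac:(lra) ltac:(lra)) as K2.
  rewrite (plogp_pos a) by lra.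
  set (u := sqrt (a + e)) in *. set (v := sqrt (a - e)) in *. set (s := sqrt a) in *.
  assert (Hu : 0 <= u) by apply sqrt_pos. assert (Hv : 0 <= v) by apply sqrt_pos.
  assert (Hs : 0 < s) by (apply sqrt_lt_R0; lra).
  assert (Eu : u * u = a + e) by (unfold u; rewrite sqrt_sqrt; lra).
  assert (Ev : v * v = a - e) by (unfold v; rewrite sqrt_sqrt; lra).
  assert (Es : s * s = a) by (unfold s; rewrite sqrt_sqrt; lra).
  assert (Huv : 2 * a * (u * v) <= 2 * a * a - e * e).
  { assert (0 <= u * v) by nra.
    assert ((u*v)*(u*v) = a*a - e*e) by nra.
    assert (0 <= 2*a*a - e*e) by nra.
    assert ((2*a*(u*v))*(2*a*(u*v)) <= (2*a*a - e*e)*(2*a*a-e*e)) by nra.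
    assert (0 <= 2*a*(u*v)) by nra.
    nra. }
  assert (Hsq : (s*(u+v))*(s*(u+v)) <= (2*a - e*e/4)*(2*a - e*e/4)).
  { assert ((s*(u+v))*(s*(u+v)) = a * (2*a + 2*(u*v))) by nra.
    assert (0 <= e*e) by nra. nra. }
  assert (Hb : s*(u+v) <= 2*a - e*e/4).
  { assert (0 <= s*(u+v)) by nra. assert (0 <= 2*a - e*e/4) by nra. nra. }
  nra. Qed.


Definition cons_r (p : word -> R) := forall w, p w = p (w ++ [false]) + p (w ++ [true]).
Definition cons_l (p : word -> R) := forall w, p w = p (false :: w) + p (true :: w).

Lemma words_S n : words (S n) = flat_map (fun w => [false :: w; true :: w]) (words n).
Proof. reflexivity. Qed.

Lemma words_length n w : In w (words n) -> length w = n.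
Proof. revert w; induction n; intros w H; simpl in H.
  - destruct H as [<-|[]]; auto.
  - apply in_flat_map in H. destruct H as [v [Hv Hw]]. simpl in Hw.
    destruct Hw as [<-|[<-|[]]]; simpl; f_equal; auto. Qed.

Lemma words_In w : In w (words (length w)).
Proof. induction w; simpl. left; auto. apply in_flat_map. exists w; split; auto.
  destruct a; simpl; auto. Qed.

Lemma words_In' n w : length w = n -> In w (words n).
Proof. intros <-; apply words_In. Qed.

Lemma sumR_words2 n (f : word -> R) :
  sumR (words (S n)) f = sumR (words n) (fun w => f (false :: w) + f (true :: w)).
Proof. rewrite words_S, sumR_flat_map. apply sumR_ext. intros. rewrite !sumR_cons, sumR_nil. lra. Qed.

Lemma sum_ext_r p : cons_r p -> forall N w, sumR (words N) (fun v => p (w ++ v)) = p w.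
Proof. intros Hp N. induction N; intros w.
  - change (words 0) with [@nil bool]. rewrite sumR_cons, sumR_nil, app_nil_r. lra.
  - rewrite sumR_words2.
    rewrite (sumR_ext _ _ (fun v => p ((w ++ [false]) ++ v) + p ((w ++ [true]) ++ v))).
    + rewrite sumR_plus, !IHN. symmetry; apply Hp.
    + intros. rewrite <- !app_assoc. reflexivity. Qed.

Lemma sum_words p : cons_r p -> forall N, sumR (words N) p = p nil.
Proof. intros Hp N. rewrite <- (sum_ext_r p Hp N nil). apply sumR_ext. reflexivity. Qed.

Lemma le_ext_r p : cons_r p -> (forall w, 0 <= p w) -> forall w v, p (w ++ v) <= p w.
Proof. intros Hp Hn w v. rewrite <- (sum_ext_r p Hp (length v) w).
  apply (sumR_single_le _ (fun v => p (w ++ v))). apply words_In. intros; auto. Qed.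

Lemma le_nil p : cons_r p -> (forall w, 0 <= p w) -> forall w, p w <= p nil.
Proof. intros. apply (le_ext_r p H H0 nil w). Qed.

Lemma le_ext_l p : cons_l p -> (forall w, 0 <= p w) -> forall b w, p (b :: w) <= p w.
Proof. intros Hp Hn b w. rewrite (Hp w). pose proof (Hn (false::w)). pose proof (Hn (true::w)). destruct b; lra. Qed.

Lemma entropy_mono p : cons_l p -> (forall w, 0 <= p w) -> Un_growing (marg_entropy p).
Proof. intros Hp Hn j. unfold marg_entropy. rewrite (sumR_words2 (S j)).
  assert (sumR (words (S j)) (fun w => plogp (p (false :: w)) + plogp (p (true :: w))) <=
          sumR (words (S j)) (fun w => plogp (p w))); [|lra].
  apply sumR_le. intros w _. rewrite (Hp w). apply plogp_super; auto. Qed.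

Lemma entropy_nonneg p : (forall w, 0 <= p w <= 1) -> forall j, 0 <= marg_entropy p j.
Proof. intros H j. unfold marg_entropy. rewrite <- sumR_opp. apply sumR_nonneg. intros.
  pose proof (plogp_le0 (p x) (H x)). lra. Qed.

Lemma cons_r_lin p1 p2 c : cons_r p1 -> cons_r p2 -> cons_r (fun w => p1 w + c * p2 w).
Proof. intros H1 H2 w. rewrite (H1 w), (H2 w). ring. Qed.
Lemma cons_l_lin p1 p2 c : cons_l p1 -> cons_l p2 -> cons_l (fun w => p1 w + c * p2 w).
Proof. intros H1 H2 w. rewrite (H1 w), (H2 w). ring. Qed.

Lemma cons_r_sum {A} (l : list A) (F : A -> word -> R) :
  (forall a, In a l -> cons_r (F a)) -> cons_r (fun w => sumR l (fun a => F a w)).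
Proof. intros H w. rewrite <- sumR_plus. apply sumR_ext. intros; apply H; auto. Qed.
Lemma cons_l_sum {A} (l : list A) (F : A -> word -> R) :
  (forall a, In a l -> cons_l (F a)) -> cons_l (fun w => sumR l (fun a => F a w)).
Proof. intros H w. rewrite <- sumR_plus. apply sumR_ext. intros; apply H; auto. Qed.

Lemma cv_le_eventually u v l m : Un_cv u l -> Un_cv v m ->
  (exists N, forall n, (N <= n)%nat -> u n <= v n) -> l <= m.
Proof. intros Hu Hv [N HN]. destruct (Rle_dec l m) as [|Hc]; auto. exfalso.
  set (e := (l - m) / 2). assert (e > 0) by (unfold e; lra).
  destruct (Hu e H) as [N1 H1]. destruct (Hv e H) as [N2 H2].
  set (n := (N + N1 + N2)%nat).
  specialize (H1 n ltac:(unfold n; lia)). specialize (H2 n ltac:(unfold n; lia)).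
  specialize (HN n ltac:(unfold n; lia)). unfold R_dist in *.
  apply Rabs_def2 in H1. apply Rabs_def2 in H2. unfold e in *. lra. Qed.


Definition pref (n : nat) (x : nat -> bool) : word := map x (seq 0 n).
Definition shift (m : nat) (x : nat -> bool) : nat -> bool := fun j => x (m + j)%nat.
Definition count (c : nat -> bool) (p : nat) (w : word) : nat :=
  length (filter (fun i => matches_at c i w) (seq 0 p)).
Definition periodic (c : nat -> bool) (p : nat) := forall n, c (n + p)%nat = c n.

Lemma bpc_eq c p w : bpc_prob c p w = / INR p * INR (count c p w).
Proof. reflexivity. Qed.

Lemma pref_length n x : length (pref n x) = n.
Proof. unfold pref. rewrite length_map, length_seq. auto. Qed.

Lemma nth_pref n x j : (j < n)%nat -> nth j (pref n x) false = x j.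
Proof. intros. unfold pref. rewrite nth_indep with (d' := x 0%nat) by (rewrite length_map, length_seq; auto).
  rewrite map_nth, seq_nth; auto. Qed.

Lemma pref_S n x : pref (S n) x = pref n x ++ [x n].
Proof. unfold pref. rewrite seq_S, map_app. reflexivity. Qed.

Lemma pref_ext n x y : (forall j, (j < n)%nat -> x j = y j) -> pref n x = pref n y.
Proof. intros H. unfold pref. apply map_ext_in. intros a Ha. apply in_seq in Ha. apply H; lia. Qed.

Lemma pref_eq_nth n x w : length w = n -> (forall j, (j < n)%nat -> x j = nth j w false) -> pref n x = w.
Proof. intros Hl H. apply nth_ext with (d := false) (d' := false).
  rewrite pref_length; auto. intros j Hj. rewrite pref_length in Hj. rewrite nth_pref; auto. Qed.

Lemma pref_shift_S n x : pref (S n) x = x 0%nat :: pref n (shift 1 x).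
Proof. apply pref_eq_nth. simpl; rewrite pref_length; auto.
  intros j Hj. destruct j; simpl; auto. rewrite nth_pref by lia. reflexivity. Qed.

Lemma pref_app n m x : pref (n + m) x = pref n x ++ pref m (shift n x).
Proof. apply pref_eq_nth. rewrite length_app, !pref_length; auto.
  intros j Hj. destruct (Nat.lt_ge_cases j n).
  - rewrite app_nth1 by (rewrite pref_length; auto). rewrite nth_pref; auto.
  - rewrite app_nth2 by (rewrite pref_length; auto). rewrite pref_length.
    rewrite nth_pref by lia. unfold shift. f_equal; lia. Qed.

Lemma matches_spec c i w : matches_at c i w = true <-> forall j, (j < length w)%nat -> c (i + j)%nat = nth j w false.
Proof. revert i; induction w as [|b w IH]; intros i; simpl.
  - split; auto. intros _ j Hj; lia.
  - rewrite andb_true_iff, IH. split.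
    + intros [H1 H2] j Hj. destruct j. apply eqb_prop in H1. rewrite Nat.add_0_r; auto.
      rewrite <- H2 by lia. f_equal; lia.
    + intros H. split. apply eqb_true_iff. rewrite <- (H 0%nat) by lia. f_equal; lia.
      intros j Hj. rewrite <- (H (S j)) by lia. f_equal; lia. Qed.

Lemma matches_pref c i n x : matches_at c i (pref n x) = true <-> forall j, (j < n)%nat -> c (i + j)%nat = x j.
Proof. rewrite matches_spec, pref_length. split; intros H j Hj; rewrite H by auto; rewrite nth_pref; auto. Qed.

Lemma matches_app c i w b : matches_at c i (w ++ [b]) = matches_at c i w && Bool.eqb (c (i + length w)%nat) b.
Proof. revert i; induction w as [|a w IH]; intros i; simpl.
  - rewrite Nat.add_0_r. destruct (Bool.eqb (c i) b); auto.
  - rewrite IH. replace (S i + length w)%nat with (i + S (length w))%nat by lia. rewrite andb_assoc; auto. Qed.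

Lemma filter_split {A} (f g h : A -> bool) l : (forall x, f x = g x || h x) -> (forall x, g x && h x = false) ->
  length (filter f l) = (length (filter g l) + length (filter h l))%nat.
Proof. intros H1 H2. induction l; simpl; auto. rewrite H1. specialize (H2 a).
  destruct (g a), (h a); simpl in *; try discriminate; lia. Qed.

Lemma count_r c p w : count c p w = (count c p (w ++ [false]) + count c p (w ++ [true]))%nat.
Proof. unfold count. apply filter_split; intros i; rewrite !matches_app;
  destruct (matches_at c i w), (c (i + length w)%nat); reflexivity. Qed.

Lemma periodic_mult c p : periodic c p -> forall m n, c (n + p * m)%nat = c n.
Proof. intros H m. induction m; intros n. rewrite Nat.mul_0_r, Nat.add_0_r; auto.
  replace (n + p * S m)%nat with ((n + p * m) + p)%nat by lia. rewrite H; auto. Qed.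

Lemma periodic_mod c p : (0 < p)%nat -> periodic c p -> forall n, c n = c (n mod p).
Proof. intros Hp H n. rewrite (Nat.div_mod n p) at 1 by lia.
  rewrite Nat.add_comm. apply periodic_mult; auto. Qed.

Lemma periodic_agree c d p : (0 < p)%nat -> periodic c p -> periodic d p ->
  (forall j, (j < p)%nat -> c j = d j) -> forall j, c j = d j.
Proof. intros Hp Hc Hd H j. rewrite (periodic_mod c p Hp Hc), (periodic_mod d p Hp Hd).
  apply H. apply Nat.mod_upper_bound; lia. Qed.

Lemma matches_periodic c p w : periodic c p -> forall i, matches_at c (i + p) w = matches_at c i w.
Proof. intros H. induction w as [|b w IH]; intros i; simpl; auto.
  rewrite H. replace (S (i + p)) with (S i + p)%nat by lia. rewrite IH. auto. Qed.

Lemma count_l c p w : (0 < p)%nat -> periodic c p ->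
  count c p w = (count c p (false :: w) + count c p (true :: w))%nat.
Proof. intros Hp H. unfold count.
  rewrite <- (filter_split (fun i => matches_at c (S i) w)).
  2: { intros i; simpl. destruct (c i), (matches_at c (S i) w); reflexivity. }
  2: { intros i; simpl. destruct (c i), (matches_at c (S i) w); reflexivity. }
  destruct p as [|p']; [lia|].
  set (m := fun i => matches_at c i w).
  assert (E1 : length (filter (fun i => matches_at c (S i) w) (seq 0 (S p'))) = length (filter m (seq 1 (S p')))).
  { rewrite <- seq_shift, filter_map_swap, length_map. reflexivity. }
  rewrite E1. change (seq 0 (S p')) with (0%nat :: seq 1 p'). rewrite seq_S.
  rewrite filter_app, length_app. simpl.
  assert (E2 : m (S p') = m 0%nat). { unfold m. replace (S p') with (0 + S p')%nat by lia. apply matches_periodic; auto. }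
  rewrite E2. destruct (m 0%nat); simpl; lia. Qed.


Lemma filter_true {A} (l : list A) : filter (fun _ => true) l = l.
Proof. induction l; simpl; f_equal; auto. Qed.

Lemma count_nil c p : count c p nil = p.
Proof. unfold count. simpl. rewrite filter_true, length_seq. auto. Qed.

Lemma bpc_nil c p : (0 < p)%nat -> bpc_prob c p nil = 1.
Proof. intros. rewrite bpc_eq, count_nil. field. apply not_0_INR; lia. Qed.

Lemma bpc_nonneg c p w : (0 < p)%nat -> 0 <= bpc_prob c p w.
Proof. intros. rewrite bpc_eq. apply Rmult_le_pos. left; apply Rinv_0_lt_compat, lt_0_INR; auto. apply pos_INR. Qed.

Lemma bpc_cons_r c p : cons_r (bpc_prob c p).
Proof. intros w. rewrite !bpc_eq, (count_r c p w), plus_INR. ring. Qed.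

Lemma bpc_cons_l c p : (0 < p)%nat -> periodic c p -> cons_l (bpc_prob c p).
Proof. intros Hp H w. rewrite !bpc_eq, (count_l c p w Hp H), plus_INR. ring. Qed.

Lemma minp_periodic c p : min_period c p -> periodic c p.
Proof. intros [_ [H _]]; exact H. Qed.


Lemma remove_length_NoDup (a : nat) l : NoDup l -> In a l -> S (length (remove Nat.eq_dec a l)) = length l.
Proof. induction l; intros Hn Hi; [destruct Hi|]. inversion Hn; subst. simpl.
  destruct (Nat.eq_dec a a0) as [->|Ne].
  - rewrite notin_remove; auto.
  - destruct Hi as [->|Hi]; [congruence|]. simpl. rewrite IHl; auto. Qed.

Lemma dep {X} (I : list X) : forall (Sx : list nat) (v : nat -> X -> R), NoDup Sx -> (length I < length Sx)%nat ->
  exists d : nat -> R, (exists i, In i Sx /\ d i <> 0) /\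
    forall w, In w I -> sumR Sx (fun i => d i * v i w) = 0.
Proof.
  induction I as [|w0 I' IH]; intros Sx v HS Hl.
  - destruct Sx as [|i0 S']; simpl in Hl; [lia|].
    exists (fun i => if Nat.eq_dec i i0 then 1 else 0). split.
    + exists i0. split; [left; auto|]. destruct (Nat.eq_dec i0 i0); [lra|congruence].
    + intros w [].
  - simpl in Hl. destruct (classic (exists i0, In i0 Sx /\ v i0 w0 <> 0)) as [[i0 [Hi0 Hv0]]|Hall].
    + set (r := fun i => v i w0 / v i0 w0).
      set (v' := fun i w => v i w - r i * v i0 w).
      set (S' := remove Nat.eq_dec i0 Sx).
      assert (HS' : NoDup S') by (apply NoDup_remove_dec; auto).
      assert (HlS : S (length S') = length Sx) by (apply remove_length_NoDup; auto).
      destruct (IH S' v' HS' ltac:(lia)) as [d [[j [Hj Hdj]] Hd]].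
      set (T := sumR S' (fun i => d i * r i)).
      exists (fun i => if Nat.eq_dec i i0 then - T else d i). split.
      * exists j. assert (j <> i0) by (intro; subst; eapply remove_In; eauto).
        split. apply in_remove in Hj; tauto. destruct (Nat.eq_dec j i0); [congruence|auto].
      * assert (Key : forall w, sumR Sx (fun i => (if Nat.eq_dec i i0 then - T else d i) * v i w)
                     = sumR S' (fun i => d i * v' i w)).
        { intros w. rewrite (sumR_remove Nat.eq_dec Sx _ i0 HS Hi0). fold S'.
          destruct (Nat.eq_dec i0 i0) as [_|C]; [|congruence].
          rewrite (sumR_ext S' _ (fun i => d i * v i w)).
          2: { intros i Hi. assert (i <> i0) by (intro; subst; eapply remove_In; eauto).
               destruct (Nat.eq_dec i i0); [congruence|auto]. }
          unfold v'. rewrite (sumR_ext S' (fun i => d i * (v i w - r i * v i0 w))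
                         (fun i => d i * v i w - (d i * r i) * v i0 w)) by (intros; ring).
          rewrite sumR_minus. rewrite (sumR_ext S' (fun i => d i * r i * v i0 w) (fun i => v i0 w * (d i * r i))) by (intros; ring).
          rewrite sumR_scal. fold T. ring. }
        intros w Hw. rewrite Key. destruct Hw as [<-|Hw]; [|apply Hd; auto].
        apply sumR_zero. intros i _. unfold v', r. field_simplify; auto. 
    + destruct (IH Sx v HS ltac:(lia)) as [d [Hnt Hd]]. exists d. split; auto.
      intros w [<-|Hw]; [|apply Hd; auto].
      apply sumR_zero. intros i Hi. assert (v i w0 = 0).
      { destruct (Req_dec (v i w0) 0); auto. exfalso; apply Hall; eauto. }
      rewrite H; ring.
Qed.


Lemma sumR_const {A} (l : list A) c : sumR l (fun _ => c) = INR (length l) * c.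
Proof. induction l; rewrite ?sumR_nil, ?sumR_cons; simpl length; [simpl; lra|]. rewrite IHl, S_INR; lra. Qed.

Lemma heavy_exists mu rho L :
  cons_r mu -> mu nil = 1 -> (forall w, 0 <= mu w <= 1) -> (forall j, marg_entropy mu j <= L) ->
  cons_r rho -> (forall w, 0 <= rho w <= mu w) -> 0 < rho nil ->
  exists eta, 0 < eta /\ forall n, exists w, length w = n /\ eta <= rho w.
Proof.
  intros Hmu Hnil Hb HL Hr Hrb Hpos. set (r := rho nil). assert (Hr0 : 0 < r) by exact Hpos.
  set (K := 4 * Rabs L / r + 1).
  assert (HK : 0 < K). { unfold K. assert (0 <= Rabs L) by apply Rabs_pos.
    assert (0 <= 4 * Rabs L / r) by (apply Rmult_le_pos; [lra| left; apply Rinv_0_lt_compat; auto]). lra. }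
  set (eps := exp (- K)). assert (Heps : 0 < eps) by apply exp_pos.
  assert (Hle : - ln eps = K) by (unfold eps; rewrite ln_exp; lra).
  exists (eps * r / 4). split. { unfold r in *. apply Rmult_lt_0_compat; [|lra]. apply Rmult_lt_0_compat; lra. }
  intros n. destruct n as [|j].
  { exists nil. split; auto. fold r. assert (eps <= 1). { unfold eps. rewrite <- exp_0. 
      destruct (Req_dec (-K) 0); [rewrite H; lra|]. left. apply exp_increasing. lra. }
    assert (eps * r <= 1 * r) by (apply Rmult_le_compat_r; lra). lra. }
  apply NNPP. intros Hno.
  assert (Hall : forall w, In w (words (S j)) -> rho w < eps * r / 4).
  { intros w Hw. apply Rnot_le_lt. intro. apply Hno. exists w. split; auto. apply words_length; auto. }
  set (light := fun w => if Rlt_dec (mu w) eps then mu w else 0).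
  assert (H1 : r <= sumR (words (S j)) light + r / 4).
  { assert (Hs : sumR (words (S j)) rho = r) by (apply sum_words; auto).
    assert (sumR (words (S j)) rho <= sumR (words (S j)) (fun w => light w + r / 4 * mu w)).
    { apply sumR_le. intros w Hw. specialize (Hall w Hw). specialize (Hrb w). specialize (Hb w). unfold light.
      destruct (Rlt_dec (mu w) eps). assert (0 <= r / 4 * mu w) by nra. lra.
      assert (eps * r / 4 <= r / 4 * mu w) by nra. lra. }
    rewrite sumR_plus, sumR_scal, (sum_words mu Hmu), Hnil in H. lra. }
  assert (H2 : sumR (words (S j)) light * K <= L).
  { rewrite <- Hle. rewrite Rmult_comm, <- sumR_scal. eapply Rle_trans; [|apply (HL j)].
    unfold marg_entropy. rewrite <- sumR_opp. apply sumR_le. intros w _.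
    rewrite Rmult_comm. unfold light. apply light_bound; auto. }
  assert (H3 : 0 <= sumR (words (S j)) light).
  { apply sumR_nonneg. intros w _. unfold light. destruct (Rlt_dec (mu w) eps); [apply Hb|lra]. }
  assert (L <= Rabs L) by apply Rle_abs.
  assert (HKr : K * (r / 4) = Rabs L + r / 4) by (unfold K; field; unfold r; lra).
  assert (sumR (words (S j)) light <= r / 4).
  { apply Rnot_lt_le. intro Hc. assert (r / 4 * K < sumR (words (S j)) light * K) by (apply Rmult_lt_compat_r; auto). nra. }
  unfold r in *. lra.
Qed.

Lemma words_exist_pos rho eta : (forall n, exists w, length w = n /\ eta <= rho w) ->
  forall n, exists w, In w (words n) /\ eta <= rho w.
Proof. intros H n. destruct (H n) as [w [Hl Hw]]. exists w. split; auto. apply words_In'; auto. Qed.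

Lemma koenig rho eta : cons_r rho -> (forall w, 0 <= rho w) ->
  (forall n, exists w, length w = n /\ eta <= rho w) ->
  exists x : nat -> bool, forall n, eta <= rho (pref n x).
Proof.
  intros Hr Hn Hall.
  set (good := fun w => forall m, exists v, length v = m /\ eta <= rho (w ++ v)).
  assert (G0 : good nil). { intros m. destruct (Hall m) as [v [? ?]]. exists v; auto. }
  assert (GS : forall w, good w -> good (w ++ [false]) \/ good (w ++ [true])).
  { intros w Hw. apply NNPP. intros Hc. apply not_or_and in Hc. destruct Hc as [H0 H1].
    apply not_all_ex_not in H0. destruct H0 as [m0 H0].
    apply not_all_ex_not in H1. destruct H1 as [m1 H1].
    destruct (Hw (S (m0 + m1))) as [v [Hlv Hv]]. destruct v as [|b v']; [simpl in Hlv; lia|].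
    simpl in Hlv. injection Hlv as Hlv.
    destruct b.
    - apply H1. exists (firstn m1 v'). split. rewrite length_firstn; lia.
      eapply Rle_trans; [apply Hv|]. rewrite <- (firstn_skipn m1 v') at 1.
      replace (w ++ true :: firstn m1 v' ++ skipn m1 v') with ((w ++ [true]) ++ firstn m1 v' ++ skipn m1 v')
        by (rewrite <- app_assoc; reflexivity).
      rewrite app_assoc. apply le_ext_r; auto.
    - apply H0. exists (firstn m0 v'). split. rewrite length_firstn; lia.
      eapply Rle_trans; [apply Hv|]. rewrite <- (firstn_skipn m0 v') at 1.
      replace (w ++ false :: firstn m0 v' ++ skipn m0 v') with ((w ++ [false]) ++ firstn m0 v' ++ skipn m0 v')
        by (rewrite <- app_assoc; reflexivity).
      rewrite app_assoc. apply le_ext_r; auto. }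
  set (nxt := fun w => if excluded_middle_informative (good (w ++ [false])) then w ++ [false] else w ++ [true]).
  set (build := fix build (n : nat) : word := match n with O => nil | S n => nxt (build n) end).
  assert (Bg : forall n, good (build n)).
  { induction n; simpl; auto. unfold nxt. destruct (excluded_middle_informative (good (build n ++ [false]))); auto.
    destruct (GS _ IHn); tauto. }
  assert (Bl : forall n, length (build n) = n).
  { induction n; simpl; auto. unfold nxt. destruct (excluded_middle_informative _); rewrite length_app; simpl; lia. }
  assert (BS : forall n, exists b, build (S n) = build n ++ [b]).
  { intros n. simpl. unfold nxt. destruct (excluded_middle_informative _); eauto. }
  set (x := fun n => nth n (build (S n)) false).
  exists x.
  assert (Bp : forall n, pref n x = build n).
  { induction n; auto. rewrite pref_S, IHn. destruct (BS n) as [b Hb].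
    unfold x. rewrite Hb. rewrite app_nth2 by (rewrite Bl; lia). rewrite Bl, Nat.sub_diag. reflexivity. }
  intros n. rewrite Bp. destruct (Bg n 0%nat) as [v [Hv Hr']]. destruct v; [|simpl in Hv; lia].
  rewrite app_nil_r in Hr'. auto.
Qed.

Lemma le_ext_l_app rho : cons_l rho -> (forall w, 0 <= rho w) -> forall u v, rho (u ++ v) <= rho v.
Proof. intros Hl Hn u. induction u; intros v; simpl. lra. eapply Rle_trans; [apply le_ext_l; auto|]. apply IHu. Qed.

Lemma shift_mono rho : cons_l rho -> (forall w, 0 <= rho w) -> forall x m n,
  rho (pref (m + n) x) <= rho (pref n (shift m x)).
Proof. intros Hl Hn x m n. rewrite pref_app. apply le_ext_l_app; auto. Qed.

Lemma finite_bound {A} (l : list A) (P : A -> nat -> Prop) :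
  (forall a, In a l -> exists t, P a t) -> exists N, forall a, In a l -> exists t, (t < N)%nat /\ P a t.
Proof. induction l; intros H. exists 0%nat; intros a [].
  destruct IHl as [N HN]. intros; apply H; right; auto.
  destruct (H a (or_introl eq_refl)) as [t Ht]. exists (S (N + t)). intros b [<-|Hb].
  exists t; split; auto; lia. destruct (HN b Hb) as [t' [? ?]]. exists t'; split; auto; lia. Qed.

Lemma find_period rho eta x : cons_r rho -> (forall w, 0 <= rho w) -> 0 < eta ->
  (forall m n, eta <= rho (pref n (shift m x))) ->
  exists i j, (i < j)%nat /\ forall t, x (i + t)%nat = x (j + t)%nat.
Proof.
  intros Hr Hn He H. apply NNPP. intros Hc.
  destruct (INR_archimed eta (rho nil) He) as [M HM].
  assert (Hd : forall a, In a (list_prod (seq 0 M) (seq 0 M)) -> exists t,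
     fst a = snd a \/ x (fst a + t)%nat <> x (snd a + t)%nat).
  { intros [i j] _. simpl. destruct (Nat.eq_dec i j) as [->|Ne]. exists 0%nat; left; auto.
    apply NNPP. intros Hc2. apply Hc. destruct (Nat.lt_ge_cases i j).
    - exists i, j. split; auto. intros t. apply NNPP. intros Hc3. apply Hc2. exists t; right; auto.
    - exists j, i. split; [lia|]. intros t. apply NNPP. intros Hc3. apply Hc2. exists t; right; auto. }
  destruct (finite_bound _ _ Hd) as [N HN].
  set (W := map (fun i => pref N (shift i x)) (seq 0 M)).
  assert (HW : NoDup W).
  { apply NoDup_map_NoDup_ForallPairs; [|apply seq_NoDup].
    intros i j Hi Hj Heq. destruct (HN (i, j)) as [t [Ht [E|E]]]. apply in_prod; auto. simpl in E; auto.
    exfalso. apply E. simpl. 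
    assert (nth t (pref N (shift i x)) false = nth t (pref N (shift j x)) false) by (rewrite Heq; auto).
    rewrite !nth_pref in H0 by auto. exact H0. }
  assert (Hinc : incl W (words N)).
  { intros w Hw. unfold W in Hw. apply in_map_iff in Hw. destruct Hw as [i [<- _]]. apply words_In'. apply pref_length. }
  pose proof (sumR_sub list_eq_dec_word (words N) W rho HW Hinc ltac:(auto)).
  rewrite (sum_words rho Hr) in H0. unfold W in H0. rewrite sumR_map in H0.
  assert (sumR (seq 0 M) (fun _ => eta) <= sumR (seq 0 M) (fun i => rho (pref N (shift i x)))).
  { apply sumR_le; auto. }
  rewrite sumR_const, length_seq in H1. lra.
Qed.

Lemma exists_min_period c r : (0 < r)%nat -> periodic c r -> exists p, min_period c p.
Proof. intros Hr Hc.
  destruct (Wf_nat.dec_inh_nat_subset_has_unique_least_element (fun p => (0 < p)%nat /\ periodic c p))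
    as [p [[[Hp1 Hp2] Hmin] _]].
  { intros n; apply classic. } { exists r; auto. }
  exists p. split; auto. split; auto. intros r' Hr' Hc'. specialize (Hmin r' (conj (proj1 Hr') Hc')). lia. Qed.

Lemma unshift c p a b n : (0 < p)%nat -> periodic c p ->
  (forall t, c (a + n + t)%nat = c (b + n + t)%nat) -> forall s, c (a + s)%nat = c (b + s)%nat.
Proof. intros Hp Hc H s. rewrite <- (periodic_mult c p Hc n (a + s)), <- (periodic_mult c p Hc n (b + s)).
  replace (a + s + p * n)%nat with (a + n + (s + p * n - n))%nat by nia.
  replace (b + s + p * n)%nat with (b + n + (s + p * n - n))%nat by nia. apply H. Qed.

Lemma shift_inj c p i j : min_period c p -> (i < p)%nat -> (j < p)%nat ->
  (forall t, c (i + t)%nat = c (j + t)%nat) -> i = j.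
Proof. intros [Hp [Hc Hmin]] Hi Hj H.
  assert (Gen : forall a b, (a < b < p)%nat -> (forall t, c (a + t)%nat = c (b + t)%nat) -> False).
  { intros a b Hab Heq. apply (Hmin (b - a)%nat ltac:(lia)). intros s.
    assert (E1 : c (s + (b - a))%nat = c (s + (b - a) + p * a)%nat) by (symmetry; apply periodic_mult; auto).
    assert (E2 : c s = c (s + p * a)%nat) by (symmetry; apply periodic_mult; auto).
    rewrite E1, E2.
    assert (E3 : (s + (b - a) + p * a = b + (s + p * a - a))%nat) by nia.
    assert (E4 : (s + p * a = a + (s + p * a - a))%nat) by nia.
    remember (s + p * a - a)%nat as u eqn:Hu. rewrite E3, E4.
    symmetry. apply Heq. }
  destruct (Nat.lt_trichotomy i j) as [Hl|[Hl|Hl]]; auto; exfalso.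
  apply (Gen i j); auto. apply (Gen j i); auto. Qed.

Lemma count_lower rho c p A : cons_r rho -> cons_l rho -> (forall w, 0 <= rho w) -> min_period c p ->
  (forall n, A <= rho (pref n c)) -> forall w, A * INR (count c p w) <= rho w.
Proof.
  intros Hr Hl Hn Hmp HA w. pose proof Hmp as [Hp [Hc _]].
  set (n := length w). set (F := filter (fun i => matches_at c i w) (seq 0 p)).
  set (vv := fun i => pref p (shift n (shift i c))).
  assert (HF : forall i, In i F -> pref n (shift i c) = w /\ (i < p)%nat).
  { intros i Hi. unfold F in Hi. apply filter_In in Hi. destruct Hi as [Hi Hm]. apply in_seq in Hi.
    split; [|lia]. apply pref_eq_nth; auto. intros j Hj. pose proof (proj1 (matches_spec c i w) Hm) as Hm2. unfold shift. apply Hm2. auto. }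
  assert (Hext : forall i, In i F -> w ++ vv i = pref (n + p) (shift i c)).
  { intros i Hi. rewrite pref_app. rewrite (proj1 (HF i Hi)). reflexivity. }
  assert (HND : NoDup (map (fun i => w ++ vv i) F)).
  { apply NoDup_map_NoDup_ForallPairs; [|apply NoDup_filter, seq_NoDup].
    intros i j Hi Hj Heq. apply app_inv_head in Heq.
    apply (shift_inj c p); try apply HF; auto.
    apply (unshift c p i j n Hp Hc). intros t.
    destruct (Nat.lt_ge_cases t p) as [Ht|Ht].
    - assert (nth t (vv i) false = nth t (vv j) false) by (rewrite Heq; auto).
      unfold vv in H. rewrite !nth_pref in H by auto. unfold shift in H.
      replace (i + n + t)%nat with (i + (n + t))%nat by lia. replace (j + n + t)%nat with (j + (n + t))%nat by lia. auto.
    - assert (Hq : forall a, periodic (fun t => c (a + n + t)%nat) p).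
      { intros a s. replace (a + n + (s + p))%nat with ((a + n + s) + p)%nat by lia. apply Hc. }
      apply (periodic_agree _ _ p Hp (Hq i) (Hq j)). intros t' Ht'.
      assert (nth t' (vv i) false = nth t' (vv j) false) by (rewrite Heq; auto).
      unfold vv in H. rewrite !nth_pref in H by auto. unfold shift in H.
      replace (i + n + t')%nat with (i + (n + t'))%nat by lia. replace (j + n + t')%nat with (j + (n + t'))%nat by lia. auto. }
  assert (Hinc : incl (map (fun i => w ++ vv i) F) (map (fun v => w ++ v) (words p))).
  { intros u Hu. apply in_map_iff in Hu. destruct Hu as [i [<- _]]. apply in_map. apply words_In'. apply pref_length. }
  assert (Hs2 : sumR F (fun i => rho (w ++ vv i)) <= rho w).
  { rewrite <- (sum_ext_r rho Hr p w).
    pose proof (sumR_sub list_eq_dec_word _ _ rho HND Hinc ltac:(intros; auto)) as Hs.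
    rewrite !sumR_map in Hs. exact Hs. }
  eapply Rle_trans; [|exact Hs2].
  unfold count. fold F. rewrite Rmult_comm, <- sumR_const. apply sumR_le.
  intros i Hi. rewrite Hext by auto. eapply Rle_trans; [apply (HA (i + (n + p))%nat)|].
  apply shift_mono; auto.
Qed.


Definition orbit_eq (c d : nat -> bool) := exists s s', forall j, c (s + j)%nat = d (s' + j)%nat.

Lemma orbit_eq_sym c d : orbit_eq c d -> orbit_eq d c.
Proof. intros [s [s' H]]. exists s', s. intros; symmetry; auto. Qed.

Lemma filter_nil_in {A} (f : A -> bool) l : (forall x, In x l -> f x = false) -> filter f l = [].
Proof. induction l; intros H; simpl; auto. rewrite H by (left; auto). apply IHl. intros; apply H; right; auto. Qed.

Lemma count_pref_one c p n : min_period c p -> (p <= n)%nat -> count c p (pref n c) = 1%nat.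
Proof. intros Hmp Hn. pose proof Hmp as [Hp [Hc _]]. unfold count.
  destruct p as [|p']; [lia|]. change (seq 0 (S p')) with (0%nat :: seq 1 p'). simpl.
  assert (E0 : matches_at c 0 (pref n c) = true) by (apply matches_pref; intros; auto).
  rewrite E0. simpl. rewrite filter_nil_in; auto.
  intros i Hi. apply in_seq in Hi. destruct (matches_at c i (pref n c)) eqn:E; auto. exfalso.
  pose proof (proj1 (matches_pref c i n c) E) as E'. clear E. rename E' into E.
  assert (Hall : forall t, c (i + t)%nat = c (0 + t)%nat).
  { apply (periodic_agree (fun t => c (i + t)%nat) (fun t => c (0 + t)%nat) (S p') Hp).
    intros s. simpl. replace (i + (s + S p'))%nat with ((i + s) + S p')%nat by lia. apply Hc.
    intros s. simpl. apply Hc. intros t Ht. simpl. apply E. lia. }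
  pose proof (shift_inj c (S p') i 0 Hmp ltac:(lia) ltac:(lia) Hall). lia. Qed.

Lemma count_zero_other c p d p' n : min_period c p -> min_period d p' -> (p * p' <= n)%nat ->
  ~ orbit_eq d c -> count d p' (pref n c) = 0%nat.
Proof. intros [Hp [Hc _]] [Hp' [Hd _]] Hn Hno. unfold count. rewrite filter_nil_in; auto.
  intros r Hr. destruct (matches_at d r (pref n c)) eqn:E; auto. exfalso. apply Hno.
  pose proof (proj1 (matches_pref d r n c) E) as E'. clear E. rename E' into E. exists r, 0%nat. 
  apply (periodic_agree (fun t => d (r + t)%nat) (fun t => c (0 + t)%nat) (p * p')).
  nia.
  - intros s. replace (r + (s + p * p'))%nat with ((r + s) + p' * p)%nat by nia. apply periodic_mult; auto.
  - intros s. simpl. apply (periodic_mult c p Hc p' s).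
  - intros t Ht. simpl. apply E. lia. Qed.

Lemma orbit_lower rho c d p' eta : cons_l rho -> (forall w, 0 <= rho w) -> min_period d p' ->
  (forall n, eta <= rho (pref n c)) -> orbit_eq c d -> forall n, eta <= rho (pref n d).
Proof. intros Hl Hn [Hp' [Hd _]] Hc [s [s' H]] n.
  set (t := (p' * s' - s')%nat).
  assert (E : pref n d = pref n (shift t (shift s c))).
  { apply pref_ext. intros j Hj. unfold shift, t. rewrite H.
    rewrite <- (periodic_mult d p' Hd s' j). f_equal. nia. }
  rewrite E. eapply Rle_trans; [|apply shift_mono; auto].
  eapply Rle_trans; [apply (Hc (s + (t + n))%nat)|]. apply shift_mono; auto. Qed.

Lemma extract mu rho L :
  cons_r mu -> mu nil = 1 -> (forall w, 0 <= mu w <= 1) -> (forall j, marg_entropy mu j <= L) ->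
  cons_r rho -> cons_l rho -> (forall w, 0 <= rho w <= mu w) -> 0 < rho nil ->
  exists c p A, min_period c p /\ 0 < A /\ (forall n, A <= rho (pref n c)) /\
    (forall w, A * INR (count c p w) <= rho w) /\ (forall e, 0 < e -> exists m, rho (pref m c) < A + e).
Proof.
  intros Hmu Hnil Hb HL Hr Hl Hrb Hpos.
  assert (Hn : forall w, 0 <= rho w) by (intros w; apply Hrb).
  destruct (heavy_exists mu rho L Hmu Hnil Hb HL Hr Hrb Hpos) as [eta [He Heta]].
  destruct (koenig rho eta Hr Hn Heta) as [x Hx].
  assert (Hsx : forall m n, eta <= rho (pref n (shift m x))).
  { intros m n. eapply Rle_trans; [apply (Hx (m + n)%nat)|]. apply shift_mono; auto. }
  destruct (find_period rho eta x Hr Hn He Hsx) as [i [j [Hij Hper]]].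
  set (c := shift i x).
  assert (Hcp : periodic c (j - i)).
  { intros t. unfold c, shift. replace (i + (t + (j - i)))%nat with (j + t)%nat by lia. symmetry; apply Hper. }
  destruct (exists_min_period c (j - i) ltac:(lia) Hcp) as [p Hmp].
  assert (Hc : forall n, eta <= rho (pref n c)) by (intros; apply Hsx).
  set (u := fun n => rho (pref n c)).
  assert (Hdec : Un_decreasing u).
  { intros n. unfold u. rewrite pref_S. apply le_ext_r; auto. }
  assert (Hlb : has_lb u). { exists 0. intros y [n ->]. unfold opp_seq, u. specialize (Hn (pref n c)). lra. }
  destruct (decreasing_cv u Hdec Hlb) as [A HA].
  assert (HAle : forall n, A <= rho (pref n c)) by (intros; apply (decreasing_ineq u A Hdec HA)).
  assert (HApos : eta <= A).
  { apply Rnot_lt_le. intros Hlt. destruct (HA (eta - A) ltac:(lra)) as [N HN].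
    specialize (HN N (le_n N)). unfold R_dist in HN. apply Rabs_def2 in HN. specialize (Hc N). unfold u in HN. lra. }
  exists c, p, A. split; auto. split; [lra|]. split; auto. split.
  - apply count_lower; auto.
  - intros e He'. destruct (HA e He') as [N HN]. exists N. specialize (HN N (le_n N)).
    unfold R_dist in HN. apply Rabs_def2 in HN. unfold u in HN. lra.
Qed.


Definition comb (n : nat) (a : nat -> R) (cc : nat -> nat -> bool) (pp : nat -> nat) (w : word) : R :=
  sumR (seq 0 n) (fun i => a i * bpc_prob (cc i) (pp i) w).

Lemma cons_r_scal p c : cons_r p -> cons_r (fun w => c * p w).
Proof. intros H w. rewrite (H w). ring. Qed.
Lemma cons_l_scal p c : cons_l p -> cons_l (fun w => c * p w).
Proof. intros H w. rewrite (H w). ring. Qed.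

Lemma comb_cons_r n a cc pp : cons_r (comb n a cc pp).
Proof. apply cons_r_sum. intros i _. apply cons_r_scal, bpc_cons_r. Qed.

Lemma comb_cons_l n a cc pp : (forall i, (i < n)%nat -> min_period (cc i) (pp i)) -> cons_l (comb n a cc pp).
Proof. intros H. apply cons_l_sum. intros i Hi. apply in_seq in Hi.
  destruct (H i ltac:(lia)) as [Hp [Hc _]]. apply cons_l_scal, bpc_cons_l; auto. Qed.

Lemma comb_nonneg n a cc pp w : (forall i, (i < n)%nat -> 0 <= a i /\ (0 < pp i)%nat) -> 0 <= comb n a cc pp w.
Proof. intros H. apply sumR_nonneg. intros i Hi. apply in_seq in Hi. destruct (H i ltac:(lia)).
  apply Rmult_le_pos; auto. apply bpc_nonneg; auto. Qed.

Lemma comb_S n a cc pp w : comb (S n) a cc pp w = comb n a cc pp w + a n * bpc_prob (cc n) (pp n) w.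
Proof. unfold comb. rewrite seq_S, sumR_app, sumR_cons, sumR_nil. simpl. lra. Qed.

Lemma comb_ext n a cc pp a' cc' pp' w : (forall i, (i < n)%nat -> a i = a' i /\ cc i = cc' i /\ pp i = pp' i) ->
  comb n a cc pp w = comb n a' cc' pp' w.
Proof. intros H. apply sumR_ext. intros i Hi. apply in_seq in Hi. destruct (H i ltac:(lia)) as [-> [-> ->]]. auto. Qed.

Lemma comb_lin n a d s cc pp w : comb n (fun i => a i + s * d i) cc pp w = comb n a cc pp w + s * comb n d cc pp w.
Proof. unfold comb. rewrite <- sumR_scal, <- sumR_plus. apply sumR_ext. intros; ring. Qed.

Lemma comb_nil n a cc pp : (forall i, (i < n)%nat -> (0 < pp i)%nat) -> comb n a cc pp nil = sumR (seq 0 n) a.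
Proof. intros H. apply sumR_ext. intros i Hi. apply in_seq in Hi. rewrite bpc_nil by (apply H; lia). ring. Qed.

Lemma small_delta (l : list nat) (a d : nat -> R) : (forall i, In i l -> 0 < a i) ->
  exists del, 0 < del /\ forall i, In i l -> del * Rabs (d i) <= a i.
Proof. induction l; intros H. exists 1; split; [lra|intros i []].
  destruct IHl as [del [Hd Hl]]. intros; apply H; right; auto.
  assert (Ha : 0 < a a0) by (apply H; left; auto).
  assert (Hr : 0 <= Rabs (d a0)) by apply Rabs_pos.
  set (e := a a0 / (Rabs (d a0) + 1)). assert (He : 0 < e) by (unfold e; apply Rdiv_lt_0_compat; lra).
  exists (Rmin del e). split. apply Rmin_glb_lt; auto.
  intros i [Heq|Hi]; [subst i|].
  - assert (Rmin del e <= e) by apply Rmin_r.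
    assert (e * Rabs (d a0) <= a a0). { assert (E : e * (Rabs (d a0) + 1) = a a0) by (unfold e; field; lra).
      nra. }
    assert (Rmin del e * Rabs (d a0) <= e * Rabs (d a0)) by (apply Rmult_le_compat_r; auto). lra.
  - assert (Rmin del e <= del) by apply Rmin_l. specialize (Hl i Hi).
    assert (Rmin del e * Rabs (d i) <= del * Rabs (d i)) by (apply Rmult_le_compat_r; auto; apply Rabs_pos). lra. Qed.

Lemma convex_weak a e : 0 <= a <= 1 -> 0 <= a + e -> 0 <= a - e -> 2 * plogp a <= plogp (a + e) + plogp (a - e).
Proof. intros. destruct (Req_dec a 0) as [->|].
  - assert (e = 0) by lra. subst. rewrite !Rplus_0_l, Rminus_0_r, plogp_0. lra.
  - pose proof (convex_gap a e ltac:(lra) ltac:(unfold Rabs; destruct (Rcase_abs e); lra)).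
    assert (0 <= e * e / 2) by (assert (0 <= e*e) by nra; lra). lra. Qed.

Lemma cv_const c : Un_cv (fun _ => c) c.
Proof. intros e He. exists 0%nat. intros. unfold R_dist. rewrite Rminus_diag, Rabs_R0. auto. Qed.

Section Pert.
Variables (k : nat) (q mu : word -> R) (L : R).
Hypothesis Hti : is_ti_prob mu.
Hypothesis Hmarg : has_marginal k mu q.
Hypothesis HL : Un_cv (marg_entropy mu) L.
Hypothesis Hmin : forall nu t, is_ti_prob nu -> has_marginal k nu q -> has_total_entropy nu t -> ext_le (Some L) t.

Lemma mu_facts : cons_r mu /\ cons_l mu /\ mu nil = 1 /\ (forall w, 0 <= mu w <= 1) /\ (forall j, marg_entropy mu j <= L).
Proof. destruct Hti as [Hnil [Hnn [Hr Hl]]].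
  assert (Hb : forall w, 0 <= mu w <= 1) by (intros w; split; auto; rewrite <- Hnil; apply le_nil; auto).
  repeat split; auto; try apply Hb. intros j. apply growing_ineq; auto. apply entropy_mono; auto. Qed.

Lemma perturb n a cc pp : (length (words (S k)) < n)%nat ->
  (forall i, (i < n)%nat -> 0 < a i /\ min_period (cc i) (pp i)) ->
  (forall i j, (i < n)%nat -> (j < n)%nat -> i <> j -> ~ orbit_eq (cc i) (cc j)) ->
  (forall w, 0 <= mu w - comb n a cc pp w) -> False.
Proof.
  intros Hn Ha Hdist Hrho. destruct mu_facts as [Hr [Hl [Hnil [Hb HLe]]]].
  assert (Hpp : forall i, (i < n)%nat -> (0 < pp i)%nat) by (intros i Hi; apply (Ha i Hi)).
  destruct (dep (words (S k)) (seq 0 n) (fun i w => bpc_prob (cc i) (pp i) w) (seq_NoDup n 0)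
     ltac:(rewrite length_seq; auto)) as [d [[i0 [Hi0 Hd0]] Hd]].
  apply in_seq in Hi0.
  destruct (small_delta (seq 0 n) a d) as [del [Hdel Hdl]].
  { intros i Hi. apply in_seq in Hi. apply Ha; lia. }
  set (D := comb n d cc pp).
  assert (HDr : cons_r D) by apply comb_cons_r.
  assert (HDl : cons_l D) by (apply comb_cons_l; intros; apply Ha; auto).
  assert (HD0 : forall w, In w (words (S k)) -> D w = 0) by (intros; apply Hd; auto).
  assert (HDnil : D nil = 0) by (rewrite <- (sum_words D HDr (S k)); apply sumR_zero; auto).
  set (nu := fun s w => mu w + s * del * D w).
  assert (Hnu_eq : forall s w, nu s w = (mu w - comb n a cc pp w) + comb n (fun i => a i + (s * del) * d i) cc pp w).
  { intros s w. unfold nu, D. rewrite comb_lin. ring. }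
  assert (Hnu_nn : forall s w, s = 1 \/ s = -1 -> 0 <= nu s w).
  { intros s w Hs. rewrite Hnu_eq. apply Rplus_le_le_0_compat; auto. apply comb_nonneg.
    intros i Hi. split; [|apply Hpp; auto]. assert (Hi' : In i (seq 0 n)) by (apply in_seq; lia).
    specialize (Hdl i Hi'). pose proof (Ha i Hi) as [Hai _].
    assert (- Rabs (d i) <= d i <= Rabs (d i)) by (unfold Rabs; destruct (Rcase_abs (d i)); lra).
    destruct Hs as [-> | ->]; nra. }
  assert (Hnu_r : forall s, cons_r (nu s)) by (intros s; unfold nu; apply cons_r_lin; auto).
  assert (Hnu_l : forall s, cons_l (nu s)) by (intros s; unfold nu; apply cons_l_lin; auto).
  assert (Hnu_nil : forall s, nu s nil = 1) by (intros s; unfold nu; rewrite HDnil, Hnil; ring).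
  assert (Hnu_b : forall s w, s = 1 \/ s = -1 -> 0 <= nu s w <= 1).
  { intros s w Hs. split; auto. rewrite <- (Hnu_nil s). apply le_nil; auto. }
  assert (Hnu_ti : forall s, s = 1 \/ s = -1 -> is_ti_prob (nu s)).
  { intros s Hs. split; [auto|]. split; [intros; apply Hnu_nn; auto|]. split; [apply Hnu_r|apply Hnu_l]. }
  assert (Hnu_m : forall s, has_marginal k (nu s) q).
  { intros s w Hw. unfold nu. rewrite HD0 by auto. rewrite <- Hmarg by auto. ring. }
  assert (Hconv : forall w, 2 * plogp (mu w) <= plogp (nu 1 w) + plogp (nu (-1) w)).
  { intros w. pose proof (Hnu_nn 1 w (or_introl eq_refl)). pose proof (Hnu_nn (-1) w (or_intror eq_refl)).
    unfold nu in *. replace (mu w + -1 * del * D w) with (mu w - 1 * del * D w) in * by ring.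
    apply convex_weak; auto. }
  assert (Hsum : forall j, marg_entropy (nu 1) j + marg_entropy (nu (-1)) j <= 2 * marg_entropy mu j).
  { intros j. unfold marg_entropy. pose proof (sumR_scal (words (S j)) (fun w => plogp (mu w)) 2) as E2.
    assert (sumR (words (S j)) (fun w => 2 * plogp (mu w)) <=
            sumR (words (S j)) (fun w => plogp (nu 1 w) + plogp (nu (-1) w))) by (apply sumR_le; auto).
    rewrite sumR_plus in H. lra. }
  assert (Hcv : forall s, s = 1 \/ s = -1 -> exists t, Un_cv (marg_entropy (nu s)) t /\ L <= t).
  { intros s Hs.
    assert (Hg : Un_growing (marg_entropy (nu s))) by (apply entropy_mono; auto; intros; apply Hnu_nn; auto).
    assert (Hub : has_ub (marg_entropy (nu s))).
    { exists (2 * L). intros y [j ->]. specialize (Hsum j). specialize (HLe j).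
      pose proof (entropy_nonneg (nu 1) (fun w => Hnu_b 1 w (or_introl eq_refl)) j).
      pose proof (entropy_nonneg (nu (-1)) (fun w => Hnu_b (-1) w (or_intror eq_refl)) j).
      destruct Hs as [-> | ->]; lra. }
    destruct (growing_cv _ Hg Hub) as [t Ht]. exists t. split; auto.
    exact (Hmin (nu s) (Some t) (Hnu_ti s Hs) (Hnu_m s) Ht). }
  destruct (Hcv 1 (or_introl eq_refl)) as [tp [Htp Htp']].
  destruct (Hcv (-1) (or_intror eq_refl)) as [tm [Htm Htm']].
  set (e0 := del * d i0 / INR (pp i0)).
  assert (He0 : 0 < e0 * e0 / 2).
  { assert (INR (pp i0) > 0) by (apply lt_0_INR, Hpp; lia).
    assert (e0 <> 0). { unfold e0. intro Hc. apply Rmult_integral in Hc. destruct Hc as [Hc|Hc].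
      apply Rmult_integral in Hc; destruct Hc; lra. apply Rinv_neq_0_compat in Hc; lra. }
    assert (0 < e0 * e0) by nra. lra. }
  destruct (finite_bound (seq 0 n) (fun j N => (pp i0 * pp j <= N)%nat)) as [N HN].
  { intros j _. exists (pp i0 * pp j)%nat. lia. }
  assert (Hgap : forall j, (N + pp i0 <= j)%nat ->
     marg_entropy (nu 1) j + marg_entropy (nu (-1)) j <= 2 * marg_entropy mu j - e0 * e0 / 2).
  { intros j Hj. set (w := pref (S j) (cc i0)).
    assert (HDw : D w = d i0 / INR (pp i0)).
    { unfold D, comb. rewrite (sumR_remove Nat.eq_dec (seq 0 n) _ i0 (seq_NoDup n 0) ltac:(apply in_seq; lia)).
      rewrite sumR_zero.
      - unfold w. rewrite bpc_eq, count_pref_one by (try apply Ha; auto; lia). simpl INR. field. apply not_0_INR.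
        specialize (Hpp i0 ltac:(lia)). lia.
      - intros i Hi. assert (i <> i0) by (intro; subst; eapply remove_In; eauto). apply in_remove in Hi.
        destruct Hi as [Hi _]. apply in_seq in Hi.
        unfold w. rewrite bpc_eq, count_zero_other with (p := pp i0); try apply Ha; try lia.
        simpl INR. ring. destruct (HN i ltac:(apply in_seq; lia)) as [t [Ht Ht']]. lia.
        apply Hdist; lia. }
    assert (Hw : In w (words (S j))) by (apply words_In'; apply pref_length).
    assert (Hpt : 2 * plogp (mu w) + e0 * e0 / 2 <= plogp (nu 1 w) + plogp (nu (-1) w)).
    { pose proof (Hnu_nn 1 w (or_introl eq_refl)). pose proof (Hnu_nn (-1) w (or_intror eq_refl)).
      unfold nu in *. rewrite HDw in *.
      replace (mu w + 1 * del * (d i0 / INR (pp i0))) with (mu w + e0) in * by (unfold e0; field; apply not_0_INR; specialize (Hpp i0 ltac:(lia)); lia).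
      replace (mu w + -1 * del * (d i0 / INR (pp i0))) with (mu w - e0) in * by (unfold e0; field; apply not_0_INR; specialize (Hpp i0 ltac:(lia)); lia).
      assert (0 < mu w). { assert (e0 <> 0) by (intro Hc; rewrite Hc in He0; lra).
        destruct (Rle_dec 0 e0); lra. }
      apply convex_gap. split; auto; apply Hb. unfold Rabs; destruct (Rcase_abs e0); lra. }
    pose proof (sumR_single_gap (words (S j)) (fun w => plogp (nu 1 w) + plogp (nu (-1) w))
       (fun w => 2 * plogp (mu w)) w (e0 * e0 / 2) Hw (fun y _ => Hconv y) Hpt) as Hg.
    unfold marg_entropy. rewrite sumR_plus, sumR_scal in Hg. lra. }
  assert (Hlim : tp + tm <= 2 * L - e0 * e0 / 2).
  { apply (cv_le_eventually (fun j => marg_entropy (nu 1) j + marg_entropy (nu (-1)) j)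
       (fun j => 2 * marg_entropy mu j - e0 * e0 / 2)).
    - apply CV_plus; auto.
    - apply CV_minus; [|apply cv_const]. 
      replace (2 * L) with (2 * L) by ring.
      apply (CV_mult (fun _ => 2) (marg_entropy mu)); [apply cv_const|auto].
    - exists (N + pp i0)%nat. auto. }
  lra.
Qed.
End Pert.


Definition extf {A} (f : nat -> A) (n : nat) (v : A) : nat -> A := fun i => if Nat.eqb i n then v else f i.

Lemma extf_old {A} (f : nat -> A) n v i : (i < n)%nat -> extf f n v i = f i.
Proof. intros. unfold extf. destruct (Nat.eqb_spec i n); [lia|auto]. Qed.
Lemma extf_new {A} (f : nat -> A) n v : extf f n v n = v.
Proof. unfold extf. rewrite Nat.eqb_refl. auto. Qed.

Lemma comb_extf n a cc pp a0 c0 p0 w :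
  comb (S n) (extf a n a0) (extf cc n c0) (extf pp n p0) w = comb n a cc pp w + a0 * bpc_prob c0 p0 w.
Proof. rewrite comb_S, !extf_new. f_equal. apply comb_ext. intros i Hi. rewrite !extf_old; auto. Qed.

Lemma finish mu n a cc pp : is_ti_prob mu ->
  (forall i, (i < n)%nat -> 0 < a i /\ min_period (cc i) (pp i)) ->
  (forall w, 0 <= mu w - comb n a cc pp w) -> mu nil - comb n a cc pp nil = 0 ->
  is_finite_convex_comb_BPC mu.
Proof.
  intros [Hnil [_ [Hr Hl]]] Ha Hrho H0.
  assert (Hz : forall w, mu w = comb n a cc pp w).
  { intros w. assert (cons_r (fun w => mu w + (-1) * comb n a cc pp w)) by (apply cons_r_lin; auto; apply comb_cons_r).
    pose proof (le_nil _ H (fun w => ltac:(specialize (Hrho w); lra)) w). simpl in H1. specialize (Hrho w). lra. }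
  exists (map (fun i => (a i, (cc i, pp i))) (seq 0 n)). split; [|split].
  - intros e He. apply in_map_iff in He. destruct He as [i [<- Hi]]. apply in_seq in Hi. simpl.
    destruct (Ha i ltac:(lia)). split; auto; lra.
  - rewrite sumR_map. simpl. transitivity (sumR (seq 0 n) a); [apply sumR_ext; auto|].
    rewrite <- (comb_nil n a cc pp). rewrite <- Hz; auto.
    intros i Hi. apply (Ha i Hi).
  - intros w. rewrite sumR_map. simpl. apply Hz.
Qed.

Section Iter.
Variables (k : nat) (q mu : word -> R) (L : R).
Hypothesis Hti : is_ti_prob mu.
Hypothesis Hmarg : has_marginal k mu q.
Hypothesis HL : Un_cv (marg_entropy mu) L.
Hypothesis Hmin : forall nu t, is_ti_prob nu -> has_marginal k nu q -> has_total_entropy nu t -> ext_le (Some L) t.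

Definition Inv n a cc pp :=
  (forall i, (i < n)%nat -> 0 < a i /\ min_period (cc i) (pp i)) /\
  (forall i j, (i < n)%nat -> (j < n)%nat -> i <> j -> ~ orbit_eq (cc i) (cc j)) /\
  (forall w, 0 <= mu w - comb n a cc pp w) /\
  (forall i, (i < n)%nat -> forall e, 0 < e -> exists m, mu (pref m (cc i)) - comb n a cc pp (pref m (cc i)) < e).

Lemma iterate : forall m n a cc pp, (n + m = S (length (words (S k))))%nat -> Inv n a cc pp ->
  is_finite_convex_comb_BPC mu.
Proof.
  destruct (mu_facts mu L Hti HL) as [Hr [Hl [Hnil [Hb HLe]]]].
  induction m; intros n a cc pp Hnm [Ha [Hd [Hrho Hz]]].
  - exfalso. apply (perturb k q mu L Hti Hmarg HL Hmin n a cc pp); auto. lia.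
  - set (rho := fun w => mu w - comb n a cc pp w).
    destruct (Req_dec (rho nil) 0) as [H0|H0].
    { apply (finish mu n a cc pp); auto. }
    assert (Hpp : forall i, (i < n)%nat -> (0 < pp i)%nat) by (intros i Hi; apply (Ha i Hi)).
    assert (Hrr' : cons_r rho).
    { pose proof (cons_r_lin mu (comb n a cc pp) (-1) Hr (comb_cons_r n a cc pp)) as X.
      intros w. unfold rho. pose proof (X w). simpl in H. lra. }
    assert (Hrl : cons_l rho).
    { pose proof (cons_l_lin mu (comb n a cc pp) (-1) Hl (comb_cons_l n a cc pp (fun i Hi => proj2 (Ha i Hi)))) as X.
      intros w. unfold rho. pose proof (X w). simpl in H. lra. }
    assert (Hrb : forall w, 0 <= rho w <= mu w).
    { intros w. unfold rho. split; auto. pose proof (comb_nonneg n a cc pp w (fun i Hi => conj (Rlt_le _ _ (proj1 (Ha i Hi))) (Hpp i Hi))). lra. }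
    assert (Hpos : 0 < rho nil) by (pose proof (Hrb nil); lra).
    destruct (extract mu rho L Hr Hnil Hb HLe Hrr' Hrl Hrb Hpos) as [c [p [A [Hmp [HA [HAl [Hcnt HAinf]]]]]]].
    pose proof Hmp as [Hp [Hcp _]].
    apply (IHm (S n) (extf a n (INR p * A)) (extf cc n c) (extf pp n p)); [lia|].
    assert (Hc' : forall w, comb (S n) (extf a n (INR p * A)) (extf cc n c) (extf pp n p) w
                   = comb n a cc pp w + A * INR (count c p w)).
    { intros w. rewrite comb_extf, bpc_eq. field. apply not_0_INR; lia. }
    split; [|split; [|split]].
    + intros i Hi. destruct (Nat.eq_dec i n) as [->|Ne].
      * rewrite !extf_new. split; auto. apply Rmult_lt_0_compat; auto. apply lt_0_INR; auto.
      * rewrite !extf_old by lia. apply Ha; lia.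
    + assert (Hnew : forall i, (i < n)%nat -> ~ orbit_eq c (cc i)).
      { intros i Hi Ho. pose proof (orbit_lower rho c (cc i) (pp i) A Hrl (fun w => proj1 (Hrb w)) (proj2 (Ha i Hi)) HAl Ho) as X.
        destruct (Hz i Hi A HA) as [m0 Hm]. specialize (X m0). unfold rho in X. lra. }
      intros i j Hi Hj Hij.
      destruct (Nat.eq_dec i n) as [->|Ni]; destruct (Nat.eq_dec j n) as [->|Nj]; try congruence.
      * rewrite extf_new, extf_old by lia. apply Hnew; lia.
      * rewrite extf_new, extf_old by lia. intro Ho. apply (Hnew i); [lia|]. apply orbit_eq_sym; auto.
      * rewrite !extf_old by lia. apply Hd; lia.
    + intros w. rewrite Hc'. specialize (Hcnt w). unfold rho in Hcnt. lra.
    + intros i Hi e He. destruct (Nat.eq_dec i n) as [->|Ni].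
      * rewrite extf_new. destruct (HAinf e He) as [m0 Hm].
        exists (m0 + p)%nat. rewrite Hc'. rewrite count_pref_one by (auto; lia). simpl INR.
        assert (rho (pref (m0 + p) c) <= rho (pref m0 c)) by (rewrite pref_app; apply le_ext_r; auto; intros; apply Hrb).
        unfold rho in *. lra.
      * rewrite extf_old by lia. destruct (Hz i ltac:(lia) e He) as [m0 Hm]. exists m0. rewrite Hc'.
        pose proof (pos_INR (count c p (pref m0 (cc i)))). assert (0 <= A * INR (count c p (pref m0 (cc i)))) by (apply Rmult_le_pos; lra).
        lra.
Qed.
End Iter.


Lemma matches_iff_pref c m w : matches_at c m w = true <-> pref (length w) (shift m c) = w.
Proof. split; intros H.
  - apply pref_eq_nth; auto. intros j Hj. unfold shift. apply (proj1 (matches_spec c m w) H); auto.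
  - apply matches_spec. intros j Hj. rewrite <- H. rewrite nth_pref by auto. reflexivity. Qed.

Lemma filter_le1 {A} (f : A -> bool) l : NoDup l -> (forall a b, In a l -> In b l -> f a = true -> f b = true -> a = b) ->
  (length (filter f l) <= 1)%nat.
Proof. induction l as [|x l IH]; intros Hn H; simpl; [lia|]. inversion Hn; subst.
  destruct (f x) eqn:E.
  - simpl. rewrite filter_nil_in; [simpl; lia|]. intros y Hy. destruct (f y) eqn:Ey; auto.
    exfalso. assert (x = y) by (apply H; simpl; auto). subst; contradiction.
  - apply IH; auto. intros; apply H; simpl; auto. Qed.

Lemma argmin (l : list nat) (g : nat -> R) : l <> [] -> exists m, In m l /\ forall m', In m' l -> g m <= g m'.
Proof. induction l as [|x l IH]; intros Hl; [congruence|]. destruct l as [|y l'].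
  - exists x. split; [left; auto|]. intros m' [<-|[]]; lra.
  - destruct IH as [m [Hm Hmin]]; [congruence|]. destruct (Rle_dec (g x) (g m)).
    + exists x. split; [left; auto|]. intros m' [<-|Hm']; [lra|]. specialize (Hmin m' Hm'); lra.
    + exists m. split; [right; auto|]. intros m' [<-|Hm']; [lra|auto]. Qed.

Lemma filter_lt {A} (f g : A -> bool) l x : (forall y, In y l -> g y = true -> f y = true) -> In x l -> f x = true -> g x = false ->
  (length (filter g l) < length (filter f l))%nat.
Proof. induction l as [|y l IH]; intros H Hx Hf Hg; [destruct Hx|]. simpl.
  assert (Hle : forall l', (forall y, In y l' -> g y = true -> f y = true) -> (length (filter g l') <= length (filter f l'))%nat).
  { induction l' as [|z l' IH']; intros H'; simpl; [lia|]. specialize (IH' (fun y Hy => H' y (or_intror Hy))).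
    destruct (g z) eqn:Eg. rewrite (H' z (or_introl eq_refl) Eg). simpl; lia. destruct (f z); simpl; lia. }
  destruct Hx as [<-|Hx].
  - rewrite Hf, Hg. simpl. specialize (Hle l (fun y Hy => H y (or_intror Hy))). lia.
  - specialize (IH (fun y Hy => H y (or_intror Hy)) Hx Hf Hg).
    destruct (g y) eqn:Eg. rewrite (H y (or_introl eq_refl) Eg). simpl; lia. destruct (f y); simpl; lia. Qed.

Section Cyc.
Variable k : nat.
Variable rho : word -> R.
Hypothesis Hr : cons_r rho.
Hypothesis Hl : cons_l rho.
Hypothesis Hnn : forall w, In w (words (S k)) -> 0 <= rho w.

Definition nextb (u : word) : bool := if Rlt_dec 0 (rho (u ++ [false])) then false else true.
Definition stepw (W : word) : word := tl W ++ [nextb (tl W)].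

Lemma cycle_step w0 : In w0 (words (S k)) -> 0 < rho w0 ->
  exists c p A, min_period c p /\ 0 < A /\
    (forall w, In w (words (S k)) -> A * INR (count c p w) <= rho w) /\
    (exists w1, In w1 (words (S k)) /\ 0 < rho w1 /\ rho w1 = A * INR (count c p w1)).
Proof.
  intros Hw0 Hp0.
  set (Ws := fun n => Nat.iter n stepw w0).
  assert (WsS : forall n, Ws (S n) = stepw (Ws n)) by reflexivity.
  assert (Wl : forall n, length (Ws n) = S k).
  { induction n. apply words_length; auto. rewrite WsS. unfold stepw. destruct (Ws n) as [|b u]; simpl in *; [lia|].
    rewrite length_app. simpl. lia. }
  assert (Wp : forall n, 0 < rho (Ws n)).
  { induction n; auto. rewrite WsS. unfold stepw. pose proof (Wl n) as Hln. destruct (Ws n) as [|b u]; [simpl in Hln; lia|].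
    simpl tl. simpl in Hln. injection Hln as Hln.
    assert (Hin : forall b', In (b' :: u) (words (S k))) by (intros; apply words_In'; simpl; lia).
    assert (Hin2 : forall b', In (u ++ [b']) (words (S k))) by (intros; apply words_In'; rewrite length_app; simpl; lia).
    assert (rho u >= rho (b :: u)). { rewrite (Hl u). pose proof (Hnn _ (Hin false)). pose proof (Hnn _ (Hin true)). destruct b; lra. }
    unfold nextb. destruct (Rlt_dec 0 (rho (u ++ [false]))); auto.
    rewrite (Hr u) in H. lra. }
  set (x := fun n => hd false (Ws n)).
  assert (Wn : forall t n, (t < S k)%nat -> nth t (Ws n) false = x (n + t)%nat).
  { induction t; intros n Ht.
    - unfold x. rewrite Nat.add_0_r. destruct (Ws n); reflexivity.
    - pose proof (Wl n) as Hln. assert (E : nth (S t) (Ws n) false = nth t (Ws (S n)) false).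
      { rewrite WsS. unfold stepw. destruct (Ws n) as [|b u]; simpl in Hln; [lia|]. simpl.
        rewrite app_nth1; auto. lia. }
      rewrite E, IHt by lia. f_equal; lia. }
  assert (Wpref : forall n, Ws n = pref (S k) (shift n x)).
  { intros n. symmetry. apply pref_eq_nth; auto. intros j Hj. rewrite Wn; auto. }
  assert (Hpig : exists i j, (i < j)%nat /\ Ws i = Ws j).
  { apply NNPP. intros Hc. set (D := length (words (S k))).
    assert (HN : NoDup (map Ws (seq 0 (S D)))).
    { apply NoDup_map_NoDup_ForallPairs; [|apply seq_NoDup]. intros a b _ _ Hab.
      destruct (Nat.lt_trichotomy a b) as [H|[H|H]]; auto; exfalso; apply Hc; eauto. }
    assert (Hinc : incl (map Ws (seq 0 (S D))) (words (S k))).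
    { intros w Hw. apply in_map_iff in Hw. destruct Hw as [i [<- _]]. apply words_In'; auto. }
    pose proof (NoDup_incl_length HN Hinc). rewrite length_map, length_seq in H. unfold D in H. lia. }
  destruct Hpig as [i [j [Hij HWij]]].
  assert (Hshift : forall t, Ws (i + t)%nat = Ws (j + t)%nat).
  { induction t. rewrite !Nat.add_0_r; auto. rewrite !Nat.add_succ_r, !WsS, IHt. auto. }
  set (c := shift i x).
  assert (Hcp : periodic c (j - i)).
  { intros t. unfold c, shift, x. replace (i + (t + (j - i)))%nat with (j + t)%nat by lia. rewrite Hshift. auto. }
  destruct (exists_min_period c (j - i) ltac:(lia) Hcp) as [p Hmp].
  pose proof Hmp as [Hp [Hcper _]].
  set (Wc := fun m => Ws (i + m)%nat).
  assert (Wcpref : forall m, Wc m = pref (S k) (shift m c)).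
  { intros m. unfold Wc. rewrite Wpref. apply pref_ext. intros t _. unfold c, shift. f_equal; lia. }
  assert (Wcdist : forall a b, (a < p)%nat -> (b < p)%nat -> Wc a = Wc b -> a = b).
  { intros a b Ha Hb Hab. apply (shift_inj c p); auto. intros t.
    assert (Gen : forall t' n1 n2, Ws n1 = Ws n2 -> Ws (n1 + t')%nat = Ws (n2 + t')%nat).
    { induction t'; intros n1 n2 Hn. rewrite !Nat.add_0_r; auto. rewrite !Nat.add_succ_r, !WsS. f_equal; auto. }
    assert (Wc (a + t)%nat = Wc (b + t)%nat).
    { unfold Wc in *. replace (i + (a + t))%nat with ((i + a) + t)%nat by lia.
      replace (i + (b + t))%nat with ((i + b) + t)%nat by lia. apply Gen; auto. }
    assert (hd false (Wc (a + t)%nat) = hd false (Wc (b + t)%nat)) by (rewrite H; auto).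
    unfold Wc in H0. fold (x (i + (a + t))%nat) (x (i + (b + t))%nat) in H0. exact H0. }
  assert (Hmatch : forall m w, In w (words (S k)) -> matches_at c m w = true <-> Wc m = w).
  { intros m w Hw. rewrite matches_iff_pref, Wcpref, (words_length _ _ Hw). tauto. }
  assert (Hcnt1 : forall w, In w (words (S k)) -> (count c p w <= 1)%nat).
  { intros w Hw. apply filter_le1. apply seq_NoDup. intros a b Ha Hb Hfa Hfb. apply in_seq in Ha, Hb.
    apply Wcdist; try lia. apply Hmatch in Hfa; auto. apply Hmatch in Hfb; auto. congruence. }
  destruct (argmin (seq 0 p) (fun m => rho (Wc m))) as [ms [Hms Hmin]].
  { destruct p; [lia|]. simpl; congruence. }
  apply in_seq in Hms.
  set (A := rho (Wc ms)).
  assert (HA : 0 < A) by apply Wp.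
  assert (HWin : forall m, In (Wc m) (words (S k))) by (intros; apply words_In'; apply Wl).
  exists c, p, A. split; auto. split; auto. split.
  - intros w Hw. destruct (count c p w) as [|n] eqn:E.
    + simpl. rewrite Rmult_0_r. apply Hnn; auto.
    + assert (n = 0%nat) by (pose proof (Hcnt1 w Hw); lia). subst n. simpl INR. rewrite Rmult_1_r.
      unfold count in E. destruct (filter (fun i0 => matches_at c i0 w) (seq 0 p)) as [|m l] eqn:Ef; [simpl in E; lia|].
      assert (Hm : In m (filter (fun i0 => matches_at c i0 w) (seq 0 p))) by (rewrite Ef; left; auto).
      apply filter_In in Hm. destruct Hm as [Hm Hmm]. apply in_seq in Hm.
      apply Hmatch in Hmm; auto. rewrite <- Hmm. apply Hmin. apply in_seq; lia.
  - exists (Wc ms). split; auto. split; auto.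
    assert (count c p (Wc ms) = 1%nat).
    { pose proof (Hcnt1 _ (HWin ms)). assert (1 <= count c p (Wc ms))%nat; [|lia].
      unfold count. destruct (filter (fun i0 => matches_at c i0 (Wc ms)) (seq 0 p)) eqn:Ef; simpl; [|lia].
      assert (In ms (filter (fun i0 => matches_at c i0 (Wc ms)) (seq 0 p))).
      { apply filter_In. split. apply in_seq; lia. apply Hmatch; auto. }
      rewrite Ef in H0; destruct H0. }
    rewrite H. simpl. unfold A. ring.
Qed.
End Cyc.


Section Dec.
Variables (k : nat) (mu : word -> R).
Hypothesis Hti : is_ti_prob mu.

Definition supp n a cc pp := length (filter (fun w => if Req_EM_T (mu w - comb n a cc pp w) 0 then false else true) (words (S k))).

Lemma decomp : forall m n a cc pp, (supp n a cc pp <= m)%nat ->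
  (forall i, (i < n)%nat -> 0 < a i /\ min_period (cc i) (pp i)) ->
  (forall w, In w (words (S k)) -> 0 <= mu w - comb n a cc pp w) ->
  exists n' a' cc' pp', (forall i, (i < n')%nat -> 0 < a' i /\ min_period (cc' i) (pp' i)) /\
    (forall w, In w (words (S k)) -> mu w = comb n' a' cc' pp' w).
Proof.
  destruct Hti as [Hnil [Hnn [Hr Hl]]].
  induction m; intros n a cc pp Hs Ha Hrho;
  (destruct (classic (exists w0, In w0 (words (S k)) /\ mu w0 - comb n a cc pp w0 <> 0)) as [[w0 [Hw0 Hne]]|Hall];
   [|exists n, a, cc, pp; split; auto; intros w Hw; apply NNPP; intro Hc; apply Hall; exists w; split; auto; lra]).
  - exfalso. assert (In w0 (filter (fun w => if Req_EM_T (mu w - comb n a cc pp w) 0 then false else true) (words (S k)))).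
    { apply filter_In. split; auto. destruct (Req_EM_T _ 0); [contradiction|auto]. }
    unfold supp in Hs. destruct (filter _ _); [destruct H|simpl in Hs; lia].
  - set (rho := fun w => mu w - comb n a cc pp w).
    assert (Hrr : cons_r rho).
    { pose proof (cons_r_lin mu (comb n a cc pp) (-1) Hr (comb_cons_r n a cc pp)) as X.
      intros w. unfold rho. pose proof (X w). simpl in H. lra. }
    assert (Hrl : cons_l rho).
    { pose proof (cons_l_lin mu (comb n a cc pp) (-1) Hl (comb_cons_l n a cc pp (fun i Hi => proj2 (Ha i Hi)))) as X.
      intros w. unfold rho. pose proof (X w). simpl in H. lra. }
    assert (Hpos : 0 < rho w0) by (pose proof (Hrho w0 Hw0); unfold rho; lra).
    destruct (cycle_step k rho Hrr Hrl Hrho w0 Hw0 Hpos) as [c [p [A [Hmp [HA [Hcnt [w1 [Hw1 [Hp1 Hq1]]]]]]]]].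
    pose proof Hmp as [Hp _].
    assert (Hc' : forall w, comb (S n) (extf a n (INR p * A)) (extf cc n c) (extf pp n p) w
                   = comb n a cc pp w + A * INR (count c p w)).
    { intros w. rewrite comb_extf, bpc_eq. field. apply not_0_INR; lia. }
    apply (IHm (S n) (extf a n (INR p * A)) (extf cc n c) (extf pp n p)).
    + unfold supp in *.
      assert (lt (length (filter (fun w => if Req_EM_T (mu w - comb (S n) (extf a n (INR p * A)) (extf cc n c) (extf pp n p) w) 0 then false else true) (words (S k))))
         (length (filter (fun w => if Req_EM_T (mu w - comb n a cc pp w) 0 then false else true) (words (S k))))); [|lia].
      apply filter_lt with (x := w1); auto.
      * intros y Hy. rewrite Hc'. destruct (Req_EM_T (mu y - comb n a cc pp y) 0) as [E|E]; auto.
        assert (count c p y = 0%nat).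
        { destruct (count c p y) eqn:Ec; auto. exfalso. specialize (Hcnt y Hy). unfold rho in Hcnt. rewrite Ec in Hcnt.
          rewrite S_INR in Hcnt. pose proof (pos_INR n0). nra. }
        rewrite H. simpl INR. destruct (Req_EM_T _ 0); auto. lra.
      * destruct (Req_EM_T _ 0); auto. unfold rho in Hp1; lra.
      * rewrite Hc'. destruct (Req_EM_T _ 0); auto. unfold rho in Hq1. lra.
    + intros i Hi. destruct (Nat.eq_dec i n) as [->|Ne].
      * rewrite !extf_new. split; auto. apply Rmult_lt_0_compat; auto. apply lt_0_INR; auto.
      * rewrite !extf_old by lia. apply Ha; lia.
    + intros w Hw. rewrite Hc'. specialize (Hcnt w Hw). unfold rho in Hcnt. lra.
Qed.
End Dec.

Lemma small_pos (l : list nat) (g : nat -> R) : (forall i, In i l -> 0 < g i) ->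
  exists del, 0 < del /\ forall i, In i l -> del <= g i.
Proof. induction l; intros H. exists 1; split; [lra|intros i []].
  destruct IHl as [del [Hd Hl]]. intros; apply H; right; auto.
  exists (Rmin del (g a)). split. apply Rmin_glb_lt; auto. apply H; left; auto.
  intros i [<-|Hi]. apply Rmin_r. eapply Rle_trans; [apply Rmin_l|auto]. Qed.

Lemma finite_extension k q mu : is_ti_prob mu -> has_marginal k mu q ->
  exists nu t, is_ti_prob nu /\ has_marginal k nu q /\ has_total_entropy nu (Some t).
Proof.
  intros Hti Hmarg. pose proof Hti as [Hnil [Hnn [Hr Hl]]].
  destruct (decomp k mu Hti _ 0 (fun _ => 0) (fun _ _ => false) (fun _ => 1%nat) (le_n _)) as [n [a [cc [pp [Ha Heq]]]]].
  { intros; lia. } { intros w _. unfold comb, sumR. simpl. specialize (Hnn w). lra. }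
  set (nu := comb n a cc pp).
  assert (Hpp : forall i, (i < n)%nat -> (0 < pp i)%nat) by (intros i Hi; apply (Ha i Hi)).
  assert (Hnr : cons_r nu) by apply comb_cons_r.
  assert (Hnl : cons_l nu) by (apply comb_cons_l; intros; apply Ha; auto).
  assert (Hnn' : forall w, 0 <= nu w) by (intros; apply comb_nonneg; intros i Hi; split; [left; apply Ha|apply Hpp]; auto).
  assert (Hnil' : nu nil = 1).
  { rewrite <- (sum_words nu Hnr (S k)), <- Hnil, <- (sum_words mu Hr (S k)). apply sumR_ext. intros; symmetry; auto. }
  assert (Hti' : is_ti_prob nu) by (repeat split; auto).
  assert (Hb : forall w, 0 <= nu w <= 1) by (intros; split; auto; rewrite <- Hnil'; apply le_nil; auto).
  destruct (small_pos (seq 0 n) (fun i => a i / INR (pp i))) as [del [Hdel Hdl]].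
  { intros i Hi. apply in_seq in Hi. apply Rdiv_lt_0_compat. apply Ha; lia. apply lt_0_INR, Hpp; lia. }
  assert (Hat : forall w, nu w = 0 \/ del <= nu w <= 1).
  { intros w. destruct (Req_dec (nu w) 0) as [|Hne]; [left; auto|right; split; [|apply Hb]].
    apply NNPP. intros Hc. apply Hne. unfold nu, comb. apply sumR_zero. intros i Hi.
    pose proof Hi as Hi'. apply in_seq in Hi'. rewrite bpc_eq.
    destruct (count (cc i) (pp i) w) as [|m] eqn:E. simpl; ring. exfalso. apply Hc.
    eapply Rle_trans; [|apply (sumR_single_le _ (fun i => a i * bpc_prob (cc i) (pp i) w) i Hi)].
    - rewrite bpc_eq, E. specialize (Hdl i Hi). simpl in Hdl. unfold Rdiv in Hdl.
      rewrite S_INR. pose proof (pos_INR m). pose proof (Ha i ltac:(lia)) as [Hai _].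
      assert (0 <= a i * / INR (pp i)) by (apply Rmult_le_pos; [lra|left; apply Rinv_0_lt_compat, lt_0_INR, Hpp; lia]).
      nra.
    - intros y Hy. apply in_seq in Hy. apply Rmult_le_pos; [left; apply Ha; lia|apply bpc_nonneg, Hpp; lia]. }
  assert (Hg : Un_growing (marg_entropy nu)) by (apply entropy_mono; auto).
  assert (Hub : has_ub (marg_entropy nu)).
  { exists (- ln del). intros y [j ->]. unfold marg_entropy. rewrite <- sumR_opp.
    eapply Rle_trans. apply (sumR_le _ _ (fun w => nu w * (- ln del))). intros w _. apply atom_bound; auto.
    rewrite (sumR_ext _ _ (fun w => (- ln del) * nu w)) by (intros; ring). rewrite sumR_scal, (sum_words nu Hnr), Hnil'. lra. }
  destruct (growing_cv _ Hg Hub) as [t Ht].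
  exists nu, t. split; auto. split; auto. intros w Hw. unfold nu. rewrite <- Heq by auto. apply Hmarg; auto.
Qed.

Theorem mainTheorem8 (k : nat) (q : word -> R) (mu : word -> R) (s : option R) :
  (1 <= k)%nat ->
  is_prob_block k q ->
  is_LTI k q ->
  is_ti_prob mu ->
  has_marginal k mu q ->
  has_total_entropy mu s ->
  (forall (nu : word -> R) (t : option R),
      is_ti_prob nu -> has_marginal k nu q -> has_total_entropy nu t ->
      ext_le s t) ->
  is_finite_convex_comb_BPC mu.
Proof.
  intros _ _ _ Hti Hmarg Hent Hmin. destruct s as [L|].
  - apply (iterate k q mu L Hti Hmarg Hent Hmin (S (length (words (S k)))) 0 (fun _ => 0) (fun _ _ => false) (fun _ => 1%nat)).
    + lia.
    + split; [intros; lia|]. split; [intros; lia|]. split; [|intros; lia].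
      intros w. unfold comb, sumR. simpl. destruct Hti as [_ [Hnn _]]. specialize (Hnn w). lra.
  - exfalso. destruct (finite_extension k q mu Hti Hmarg) as [nu [t [H1 [H2 H3]]]].
    exact (Hmin nu (Some t) H1 H2 H3).
Qed.
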